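(* Let $n, a_1,\ldots,a_n$ be positive integers and let $M=M_{a_1,\ldots,a_n}=\prod_{k=1}^{n}\begin{pmatrix}0&1\\ 1&a_k\end{pmatrix}$ (product from left to right). Then $(a_1,a_2,\ldots,a_n)$ is one of the LLS periods of $M$.
   Context: Let $O=(0,0)$. For vectors $u,v\in\mathbb{R}^2$, $\det(u,v)$ is the determinant of the matrix with columns $u,v$; for points $X,Y$, $XY$ denotes the vector $Y-X$. An integer point is a point of $\mathbb{Z}^2$. All angles considered are convex angles with vertex $O$. The sail of such an angle is defined as follows: take the convex hull of all integer points in the closed angle other than $O$; the sail is the broken line formed by the boundary of this convex hull with the (possibly empty) rays lying on the edges of the angle removed (their endpoints kept). It is oriented from the first edge of the angle to the second. For a broken line $\ldots A_{k-1}A_kA_{k+1}\ldots$ (finite or infinite, vertices being the break points, with $O,A_k,A_{k+1}$ never collinear) its LLS sequence is given by $a_{2k}=\det(OA_k,OA_{k+1})$ for each edge $A_kA_{k+1}$ and $a_{2k-1}=\det(A_kA_{k-1},A_kA_{k+1})/(a_{2k-2}a_{2k})$ for each interior vertex $A_k$. The LLS sequence of an angle is the sequence of absolute values of the LLS sequence of its sail. Let $M\in\mathrm{GL}(2,\mathbb{Z})$ have two distinct real irrational eigenvalues. The complement of the union of its two eigenlines consists of four open cones; the sails of (the closures of) these cones are the sails associated to $M$ (they are bi-infinite broken lines). The LLS sequence of $M$ is the (bi-infinite) LLS sequence of an associated sail; it is known that all associated sails give the same sequence up to a shift of indices. $M^2$ maps each associated sail to itself, shifting its vertices by some number $n'\ge1$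 of positions; any block of $n'$ consecutive entries of the LLS sequence of $M$ is called an LLS period of $M$. *)

(* Defs.v *)
From Stdlib Require Import Reals ZArith List.
Open Scope R_scope.

Definition pt := (R * R)%type.
Definition O : pt := (0, 0).
Definition vsub (p q : pt) : pt := (fst p - fst q, snd p - snd q).
Definition vscale (c : R) (p : pt) : pt := (c * fst p, c * snd p).
Definition det (u v : pt) : R := fst u * snd v - snd u * fst v.
Definition dist (p q : pt) : R :=
  sqrt ((fst p - fst q) ^ 2 + (snd p - snd q) ^ 2).

Definition integer_point (p : pt) : Prop :=
  exists x y : Z, p = (IZR x, IZR y).

Record mat2 := Mat { m11 : Z; m12 : Z; m21 : Z; m22 : Z }.
Definition mmul (A B : mat2) : mat2 :=
  Mat (m11 A * m11 B + m12 A * m21 B)%Z (m11 A * m12 B + m12 A * m22 B)%Z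
      (m21 A * m11 B + m22 A * m21 B)%Z (m21 A * m12 B + m22 A * m22 B)%Z.
Definition mid : mat2 := Mat 1 0 0 1.
Definition elem (a : Z) : mat2 := Mat 0 1 1 a.
Definition Mprod (l : list Z) : mat2 := fold_left (fun M a => mmul M (elem a)) l mid.
Definition act (M : mat2) (p : pt) : pt :=
  (IZR (m11 M) * fst p + IZR (m12 M) * snd p,
   IZR (m21 M) * fst p + IZR (m22 M) * snd p).

Definition cone (u w : pt) (p : pt) : Prop :=
  exists s t, 0 <= s /\ 0 <= t /\ p = (s * fst u + t * fst w, s * snd u + t * snd w).
Definition ray (e : pt) (p : pt) : Prop := exists t, 0 <= t /\ p = vscale t e.

Definition conv (S : pt -> Prop) (p : pt) : Prop :=
  exists l : list (R * pt),
    Forall (fun c => 0 <= fst c /\ S (snd c)) l /\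
    fold_right (fun c acc => fst c + acc) 0 l = 1 /\
    p = fold_right (fun c acc => (fst c * fst (snd c) + fst acc,
                                  fst c * snd (snd c) + snd acc)) O l.

Definition boundary (K : pt -> Prop) (p : pt) : Prop :=
  forall eps, 0 < eps ->
    (exists q, K q /\ dist p q < eps) /\ (exists q, ~ K q /\ dist p q < eps).

Definition hull_cone (u w : pt) : pt -> Prop :=
  conv (fun p => cone u w p /\ integer_point p /\ p <> O).

(** The sail (as a set): boundary of the hull with the rays lying on the edges
    of the angle removed, their endpoints kept.  A boundary point p lying on an
    edge is removed iff a boundary point strictly closer to O lies on that same
    edge ray (i.e. p is on the ray but is not its endpoint). *)
Definition sail (u w : pt) (p : pt) : Prop :=
  boundary (hull_cone u w) p /\
  ~ (exists e, (e = u \/ e = w) /\ ray e p /\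
       exists c, 0 <= c < 1 /\ boundary (hull_cone u w) (vscale c p)).

Definition in_segment (a b p : pt) : Prop :=
  exists t, 0 <= t <= 1 /\ p = (fst a + t * (fst b - fst a), snd a + t * (snd b - snd a)).

(** A : Z -> R^2 is the vertex sequence of the sail of the angle (u, w), as a
    bi-infinite broken line oriented from the first edge (u) to the second (w):
    the sail is the union of the segments [A_k, A_{k+1}], every A_k is a break
    point, and the A_k progress from the u-edge towards the w-edge. *)
Definition sail_vertices (u w : pt) (A : Z -> pt) : Prop :=
  (forall p, sail u w p <-> exists k, in_segment (A k) (A (k + 1)%Z) p) /\
  (forall k, det (vsub (A (k - 1)%Z) (A k)) (vsub (A (k + 1)%Z) (A k)) <> 0) /\
  (forall k, 0 < det (A k) (A (k + 1)%Z) * det u w).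

(** LLS sequence (absolute values) of the broken line with vertices A:
    entry 2k   = |det(OA_k, OA_{k+1})|,
    entry 2k-1 = |det(A_kA_{k-1}, A_kA_{k+1}) / (a_{2k-2} a_{2k})|. *)
Definition lls (A : Z -> pt) (m : Z) : R :=
  let edge k := det (A k) (A (k + 1)%Z) in
  if Z.even m then Rabs (edge (m / 2)%Z)
  else let k := ((m + 1) / 2)%Z in
       Rabs (det (vsub (A (k - 1)%Z) (A k)) (vsub (A (k + 1)%Z) (A k))
             / (edge (k - 1)%Z * edge k)).

(** (u, w) spans (the closure of) one of the four cones cut out by the two
    eigenlines of M, with u on the contracting eigenline (|lambda| < 1) and w on
    the expanding one (|mu| > 1); the first edge of the angle is the u-edge. *)
Definition assoc_angle (M : mat2) (u w : pt) : Prop :=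
  det u w <> 0 /\
  exists lam mu, Rabs lam < 1 < Rabs mu /\
    act M u = vscale lam u /\ act M w = vscale mu w.

(* Main.v *)
Require Import Defs.
From Stdlib Require Import Reals ZArith List Lra Lia Psatz.
Open Scope R_scope.
Import ListNotations.

Definition glin (c1 c2 : R) (p : pt) : R := c1 * fst p + c2 * snd p.

Lemma dist_ge_x p q : Rabs (fst p - fst q) <= Defs.dist p q.
Proof. unfold Defs.dist. rewrite <- sqrt_Rsqr_abs. apply sqrt_le_1_alt. unfold Rsqr. simpl. pose proof (Rle_0_sqr (snd p - snd q)). unfold Rsqr in *. nra. Qed.

Lemma dist_ge_y p q : Rabs (snd p - snd q) <= Defs.dist p q.
Proof. unfold Defs.dist. rewrite <- sqrt_Rsqr_abs. apply sqrt_le_1_alt. unfold Rsqr. simpl. pose proof (Rle_0_sqr (fst p - fst q)). unfold Rsqr in *. nra. Qed.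

Lemma dist_le p q : Defs.dist p q <= Rabs (fst p - fst q) + Rabs (snd p - snd q).
Proof.
  unfold Defs.dist. rewrite <- (sqrt_Rsqr (Rabs (fst p - fst q) + Rabs (snd p - snd q))).
  2:{ pose proof (Rabs_pos (fst p - fst q)); pose proof (Rabs_pos (snd p - snd q)); lra. }
  apply sqrt_le_1_alt. rewrite <- (pow2_abs (fst p - fst q)), <- (pow2_abs (snd p - snd q)).
  unfold Rsqr. pose proof (Rabs_pos (fst p - fst q)); pose proof (Rabs_pos (snd p - snd q)). nra.
Qed.

Lemma dist_refl_pt p : Defs.dist p p = 0.
Proof. unfold Defs.dist. replace ((fst p - fst p) ^ 2 + (snd p - snd p) ^ 2) with 0 by ring. apply sqrt_0. Qed.

Lemma glin_diff c1 c2 p q :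
  Rabs (glin c1 c2 q - glin c1 c2 p) <= (Rabs c1 + Rabs c2) * Defs.dist p q.
Proof.
  unfold glin.
  replace (c1 * fst q + c2 * snd q - (c1 * fst p + c2 * snd p))
    with (c1 * (fst q - fst p) + c2 * (snd q - snd p)) by ring.
  eapply Rle_trans. apply Rabs_triang.
  rewrite !Rabs_mult. rewrite (Rabs_minus_sym (fst q)), (Rabs_minus_sym (snd q)).
  pose proof (dist_ge_x p q). pose proof (dist_ge_y p q).
  pose proof (Rabs_pos c1). pose proof (Rabs_pos c2).
  pose proof (Rabs_pos (fst p - fst q)). pose proof (Rabs_pos (snd p - snd q)).
  nra.
Qed.

Definition cw (l : list (R * pt)) : R := fold_right (fun c acc => fst c + acc) 0 l.
Definition cpt (l : list (R * pt)) : pt :=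
  fold_right (fun c acc => (fst c * fst (snd c) + fst acc, fst c * snd (snd c) + snd acc)) O l.

Lemma cw_cons c l : cw (c :: l) = fst c + cw l.
Proof. reflexivity. Qed.
Lemma cpt_cons c l : cpt (c :: l) = (fst c * fst (snd c) + fst (cpt l), fst c * snd (snd c) + snd (cpt l)).
Proof. reflexivity. Qed.

Lemma conv_glin (S : pt -> Prop) c1 c2 b p :
  (forall q, S q -> b <= glin c1 c2 q) -> conv S p -> b <= glin c1 c2 p.
Proof.
  intros HS [l [Hf [Hs Hp]]]. subst p.
  assert (forall l, Forall (fun c => 0 <= fst c /\ S (snd c)) l ->
     b * cw l <= glin c1 c2 (cpt l)) as Hg.
  { induction l0; intros H.
    - unfold glin, O, cw, cpt; simpl; lra.
    - rewrite cw_cons, cpt_cons. inversion H; subst. destruct H2 as [H2a H2b]. specialize (HS _ H2b).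
      specialize (IHl0 H3). pose proof (Rmult_le_compat_l _ _ _ H2a HS) as HW.
      unfold glin in *; simpl in *. lra. }
  specialize (Hg l Hf). change (b <= glin c1 c2 (cpt l)). unfold cw in Hg. rewrite Hs in Hg. lra.
Qed.

Lemma bdry_glin K c1 c2 b p :
  boundary K p -> (forall q, K q -> b <= glin c1 c2 q) -> b <= glin c1 c2 p.
Proof.
  intros Hb HK. destruct (Rle_or_lt b (glin c1 c2 p)) as [|Hlt]; auto.
  pose proof (Rabs_pos c1). pose proof (Rabs_pos c2).
  set (e := (b - glin c1 c2 p) / (Rabs c1 + Rabs c2 + 1)).
  assert (He: 0 < e) by (unfold e; apply Rdiv_lt_0_compat; lra).
  assert (Hee : (Rabs c1 + Rabs c2 + 1) * e = b - glin c1 c2 p) by (unfold e; field; lra).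
  destruct (Hb e He) as [[q [Kq Hq]] _]. specialize (HK q Kq).
  pose proof (glin_diff c1 c2 p q) as Hd.
  pose proof (Rle_abs (glin c1 c2 q - glin c1 c2 p)).
  assert ((Rabs c1 + Rabs c2) * Defs.dist p q <= (Rabs c1 + Rabs c2) * e).
  { apply Rmult_le_compat_l; lra. }
  nra.
Qed.

Lemma mono_lt (g : Z -> R) : (forall k, g k < g (k + 1)%Z) ->
  forall a b, (a < b)%Z -> g a < g b.
Proof.
  intros Hg a b Hab.
  assert (forall d : nat, g a < g (a + 1 + Z.of_nat d)%Z) as H.
  { induction d. - replace (a + 1 + Z.of_nat 0)%Z with (a + 1)%Z by lia. auto.
    - eapply Rlt_trans. apply IHd. replace (a + 1 + Z.of_nat (S d))%Z with (a + 1 + Z.of_nat d + 1)%Z by lia. auto. }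
  specialize (H (Z.to_nat (b - a - 1))). replace (a + 1 + Z.of_nat (Z.to_nat (b - a - 1)))%Z with b in H by lia. auto.
Qed.

Lemma mono_le (g : Z -> R) : (forall k, g k < g (k + 1)%Z) ->
  forall a b, (a <= b)%Z -> g a <= g b.
Proof.
  intros Hg a b Hab. destruct (Z.eq_dec a b). subst; lra. left; apply mono_lt; auto; lia.
Qed.

Lemma mono_rev_lt (g : Z -> R) : (forall k, g k < g (k + 1)%Z) ->
  forall a b, g a < g b -> (a < b)%Z.
Proof.
  intros Hg a b H. destruct (Z_lt_le_dec a b); auto. pose proof (mono_le g Hg b a l). lra.
Qed.

Lemma mono_inj (g : Z -> R) : (forall k, g k < g (k + 1)%Z) ->
  forall a b, g a = g b -> a = b.
Proof.
  intros Hg a b H. destruct (Z.lt_total a b) as [h|[h|h]]; auto;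
  pose proof (mono_lt g Hg _ _ h); lra.
Qed.

Lemma disc_ivt (g : Z -> R) x : (forall k, g k < g (k + 1)%Z) ->
  (exists k, g k <= x) -> (exists k, x < g k) -> exists k, g k <= x < g (k + 1)%Z.
Proof.
  intros Hg [k0 H0] [k1 H1].
  assert (forall d : nat, forall k, g k <= x -> x < g (k + Z.of_nat d)%Z ->
            exists k', g k' <= x < g (k' + 1)%Z) as H.
  { induction d; intros k Hk Hk'.
    - replace (k + Z.of_nat 0)%Z with k in Hk' by lia. lra.
    - destruct (Rlt_or_le x (g (k + 1)%Z)). exists k; split; auto.
      apply (IHd (k + 1)%Z); auto. replace (k + 1 + Z.of_nat d)%Z with (k + Z.of_nat (S d))%Z by lia. auto. }
  assert (k0 < k1)%Z. { apply (mono_rev_lt g Hg). lra. }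
  apply (H (Z.to_nat (k1 - k0)) k0); auto. replace (k0 + Z.of_nat (Z.to_nat (k1 - k0)))%Z with k1 by lia. auto.
Qed.

Lemma Rdiv_le_0_compat a b : 0 <= a -> 0 < b -> 0 <= a / b.
Proof. intros. unfold Rdiv. apply Rmult_le_pos; auto. left. apply Rinv_0_lt_compat; auto. Qed.


Section Geo.
Variables (u w : pt) (V : Z -> pt) (fc : Z -> Z * Z).
Hypothesis HD : det u w <> 0.

Definition sc (p : pt) := det p w / det u w.
Definition tc (p : pt) := det u p / det u w.
Definition rho (p : pt) := tc p / sc p.
Definition fk k (p : pt) := IZR (fst (fc k)) * fst p + IZR (snd (fc k)) * snd p.
Definition Pt (q : pt) := cone u w q /\ integer_point q /\ q <> O.
Definition seg k p := in_segment (V k) (V (k + 1)%Z) p.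

Hypothesis HV_int : forall k, integer_point (V k).
Hypothesis HV_s : forall k, 0 < sc (V k).
Hypothesis HV_t : forall k, 0 < tc (V k).
Hypothesis HV_det : forall k, 0 < det (V k) (V (k + 1)%Z) * det u w.
Hypothesis Hf1 : forall k, fk k (V k) = 1.
Hypothesis Hf2 : forall k, fk k (V (k + 1)%Z) = 1.
Hypothesis Hfu : forall k, 0 < fk k u.
Hypothesis Hfw : forall k, 0 < fk k w.
Hypothesis Hfu0 : forall e, 0 < e -> exists k, fk k u < e.
Hypothesis Hfw0 : forall e, 0 < e -> exists k, fk k w < e.
Hypothesis Hrho_up : forall r, exists k, r < rho (V k).
Hypothesis Hrho_dn : forall r, 0 < r -> exists k, rho (V k) < r.
Hypothesis Hcol : forall k, det (vsub (V (k - 1)%Z) (V k)) (vsub (V (k + 1)%Z) (V k)) <> 0.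

Lemma HD' : fst u * snd w - snd u * fst w <> 0.
Proof. exact HD. Qed.

Lemma decomp p : p = (sc p * fst u + tc p * fst w, sc p * snd u + tc p * snd w).
Proof.
  pose proof HD'. rewrite (surjective_pairing p) at 1. unfold sc, tc, det.
  f_equal; field; auto.
Qed.

Lemma sc_glin p : sc p = glin (snd w / det u w) (- fst w / det u w) p.
Proof. pose proof HD'. unfold sc, glin, det. field. auto. Qed.
Lemma tc_glin p : tc p = glin (- snd u / det u w) (fst u / det u w) p.
Proof. pose proof HD'. unfold tc, glin, det. field. auto. Qed.
Lemma fk_glin k p : fk k p = glin (IZR (fst (fc k))) (IZR (snd (fc k))) p.
Proof. reflexivity. Qed.

Lemma cone_iff p : cone u w p <-> 0 <= sc p /\ 0 <= tc p.
Proof.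
  pose proof HD'. split.
  - intros [s [t [Hs [Ht E]]]]. subst p. unfold sc, tc, det; simpl.
    assert (E1 : ((s * fst u + t * fst w) * snd w - (s * snd u + t * snd w) * fst w) / (fst u * snd w - snd u * fst w) = s) by (field; auto).
    assert (E2 : (fst u * (s * snd u + t * snd w) - snd u * (s * fst u + t * fst w)) / (fst u * snd w - snd u * fst w) = t) by (field; auto).
    rewrite E1, E2. auto.
  - intros [Hs Ht]. exists (sc p), (tc p). repeat split; auto. apply decomp.
Qed.

Lemma sc_u : sc u = 1.
Proof. pose proof HD'. unfold sc, det. field. auto. Qed.
Lemma tc_u : tc u = 0.
Proof. pose proof HD'. unfold tc, det. field. auto. Qed.
Lemma sc_w : sc w = 0.
Proof. pose proof HD'. unfold sc, det. field. auto. Qed.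
Lemma tc_w : tc w = 1.
Proof. pose proof HD'. unfold tc, det. field. auto. Qed.

Lemma fk_dec k p : fk k p = sc p * fk k u + tc p * fk k w.
Proof. rewrite (decomp p) at 1. unfold fk; simpl. ring. Qed.

Lemma sc_scale c p : sc (vscale c p) = c * sc p.
Proof. pose proof HD'. unfold sc, vscale, det; simpl. field; auto. Qed.
Lemma tc_scale c p : tc (vscale c p) = c * tc p.
Proof. pose proof HD'. unfold tc, vscale, det; simpl. field; auto. Qed.

Lemma det_sc p q : det p q = (sc p * tc q - tc p * sc q) * det u w.
Proof. pose proof HD'. unfold sc, tc, det. field. auto. Qed.

Lemma Pt_f k q : Pt q -> 1 <= fk k q.
Proof.
  intros [Hc [[x [y E]] Hn]]. apply cone_iff in Hc. destruct Hc as [Hs Ht].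
  assert (Hpos : 0 < fk k q).
  { rewrite fk_dec. specialize (Hfu k). specialize (Hfw k).
    destruct Hs as [Hs|Hs]. nra. destruct Ht as [Ht|Ht]. nra.
    exfalso. apply Hn. rewrite (decomp q). rewrite <- Hs, <- Ht. unfold O. f_equal; ring. }
  revert Hpos. rewrite E. unfold fk; simpl. rewrite <- !mult_IZR, <- plus_IZR.
  intro H. apply lt_IZR in H. apply IZR_le. lia.
Qed.

Lemma H_f k p : hull_cone u w p -> 1 <= fk k p.
Proof. intro H. rewrite fk_glin. eapply conv_glin; [|exact H]. intros q Hq. rewrite <- fk_glin. apply Pt_f; auto. Qed.

Lemma H_sc p : hull_cone u w p -> 0 <= sc p.
Proof. intro H. rewrite sc_glin. eapply conv_glin; [|exact H]. intros q [Hq _]. rewrite <- sc_glin. apply cone_iff in Hq. tauto. Qed.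
Lemma H_tc p : hull_cone u w p -> 0 <= tc p.
Proof. intro H. rewrite tc_glin. eapply conv_glin; [|exact H]. intros q [Hq _]. rewrite <- tc_glin. apply cone_iff in Hq. tauto. Qed.

Lemma scale_Pt (N : Z) k : (1 <= N)%Z -> Pt (vscale (IZR N) (V k)).
Proof.
  intro HN. assert (0 < IZR N) by (apply IZR_lt; lia).
  pose proof (HV_s k). pose proof (HV_t k).
  split; [|split].
  - apply cone_iff. rewrite sc_scale, tc_scale. split; nra.
  - destruct (HV_int k) as [x [y E]]. exists (N * x)%Z, (N * y)%Z. rewrite E. unfold vscale; simpl. rewrite !mult_IZR. auto.
  - intro E. assert (sc (vscale (IZR N) (V k)) = 0). { rewrite E. unfold sc, O, det; simpl. field. exact HD. }
    rewrite sc_scale in H2. nra.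
Qed.

Lemma V_Pt k : Pt (V k).
Proof.
  replace (V k) with (vscale (IZR 1) (V k)). apply scale_Pt; lia.
  unfold vscale; simpl. rewrite !Rmult_1_l. symmetry; apply surjective_pairing.
Qed.

Lemma region k (N : Z) x y : (2 <= N)%Z -> 0 <= x -> 0 <= y -> 1 <= x + y -> x + y <= IZR N ->
  hull_cone u w (x * fst (V k) + y * fst (V (k + 1)%Z), x * snd (V k) + y * snd (V (k + 1)%Z)).
Proof.
  intros HN Hx Hy H1 H2.
  assert (HN' : 2 <= IZR N) by (apply IZR_le; lia).
  remember (x + y) as s eqn:Es. set (th := (IZR N - s) / (IZR N - 1)).
  assert (Hth0 : 0 <= th) by (unfold th; apply Rdiv_le_0_compat; lra).
  assert (Hth1 : th <= 1) by (unfold th; apply Rmult_le_reg_r with (IZR N - 1); [lra|]; unfold Rdiv; rewrite Rmult_assoc, Rinv_l; lra).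
  assert (Hs0 : 0 < s) by lra.
  assert (Hq : forall a, 0 <= a -> 0 <= a / s) by (intros; apply Rdiv_le_0_compat; lra).
  exists [(th * (x / s), V k); (th * (y / s), V (k + 1)%Z);
          ((1 - th) * (x / s), vscale (IZR N) (V k)); ((1 - th) * (y / s), vscale (IZR N) (V (k + 1)%Z))].
  split; [|split].
  - assert (Ht1 : 0 <= 1 - th) by lra.
    apply Forall_cons; [split; simpl; [apply Rmult_le_pos; auto | apply V_Pt]|].
    apply Forall_cons; [split; simpl; [apply Rmult_le_pos; auto | apply V_Pt]|].
    apply Forall_cons; [split; simpl; [apply Rmult_le_pos; auto | apply scale_Pt; lia]|].
    apply Forall_cons; [split; simpl; [apply Rmult_le_pos; auto | apply scale_Pt; lia]|].
    apply Forall_nil.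
  - simpl. replace (th * (x / s) + (th * (y / s) + ((1 - th) * (x / s) + ((1 - th) * (y / s) + 0)))) with ((x + y) / s) by (field; lra).
    rewrite <- Es. field. lra.
  - unfold vscale, O; simpl.
    assert (Hk : th + (1 - th) * IZR N = s) by (unfold th; field; lra).
    f_equal.
    + apply (Rmult_eq_reg_r s); [|lra].
      transitivity ((th + (1 - th) * IZR N) * (x * fst (V k) + y * fst (V (k + 1)%Z))); [rewrite Hk; ring|field; lra].
    + apply (Rmult_eq_reg_r s); [|lra].
      transitivity ((th + (1 - th) * IZR N) * (x * snd (V k) + y * snd (V (k + 1)%Z))); [rewrite Hk; ring|field; lra].
Qed.


Lemma comb_sc a b x y : sc (x * fst a + y * fst b, x * snd a + y * snd b) = x * sc a + y * sc b.
Proof. pose proof HD'. unfold sc, det; simpl. field. auto. Qed.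
Lemma comb_tc a b x y : tc (x * fst a + y * fst b, x * snd a + y * snd b) = x * tc a + y * tc b.
Proof. pose proof HD'. unfold tc, det; simpl. field. auto. Qed.
Lemma comb_fk k a b x y : fk k (x * fst a + y * fst b, x * snd a + y * snd b) = x * fk k a + y * fk k b.
Proof. unfold fk; simpl. ring. Qed.

Lemma coords a b p : det a b <> 0 ->
  p = ((det p b / det a b) * fst a + (det a p / det a b) * fst b,
       (det p b / det a b) * snd a + (det a p / det a b) * snd b).
Proof. intros H. rewrite (surjective_pairing p) at 1. unfold det in *. f_equal; field; auto. Qed.

Lemma seg_param k p : seg k p -> exists t, 0 <= t <= 1 /\
  p = ((1 - t) * fst (V k) + t * fst (V (k + 1)%Z), (1 - t) * snd (V k) + t * snd (V (k + 1)%Z)).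
Proof. intros [t [Ht E]]. exists t. split; auto. rewrite E. f_equal; ring. Qed.

Lemma seg_sc_pos k p : seg k p -> 0 < sc p /\ 0 < tc p.
Proof.
  intros H. destruct (seg_param k p H) as [t [Ht E]]. rewrite E, comb_sc, comb_tc.
  pose proof (HV_s k). pose proof (HV_s (k + 1)%Z). pose proof (HV_t k). pose proof (HV_t (k + 1)%Z).
  split; nra.
Qed.

Lemma seg_fk k p : seg k p -> fk k p = 1.
Proof.
  intros H. destruct (seg_param k p H) as [t [Ht E]]. rewrite E, comb_fk, Hf1, Hf2. ring.
Qed.

Lemma seg_H k p : seg k p -> hull_cone u w p.
Proof.
  intros H. destruct (seg_param k p H) as [t [Ht E]]. rewrite E. apply (region k 2); try lia; try lra.
Qed.

Lemma seg_sail k p : seg k p -> sail u w p.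
Proof.
  intros Hs. pose proof (seg_sc_pos k p Hs) as [Hsp Htp]. split.
  - intros eps He. split.
    + exists p. split. eapply seg_H; eauto. rewrite dist_refl_pt. auto.
    + pose proof (Rabs_pos (fst p)). pose proof (Rabs_pos (snd p)).
      set (A := Rabs (fst p) + Rabs (snd p)).
      set (d := eps / (2 * (A + 1))).
      assert (Hd : 0 < d) by (unfold d; apply Rdiv_lt_0_compat; unfold A; lra).
      assert (Hd2 : d * (A + 1) = eps / 2) by (unfold d; field; unfold A; lra).
      exists (vscale (1 - d) p). split.
      * intro HH. apply (H_f k) in HH. pose proof (seg_fk k p Hs) as Hf0. unfold fk, vscale in *; simpl in *.
        replace (IZR (fst (fc k)) * ((1 - d) * fst p) + IZR (snd (fc k)) * ((1 - d) * snd p))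
          with ((1 - d) * (IZR (fst (fc k)) * fst p + IZR (snd (fc k)) * snd p)) in HH by ring.
        rewrite Hf0 in HH. lra.
      * eapply Rle_lt_trans. apply dist_le. unfold vscale; simpl.
        replace (fst p - (1 - d) * fst p) with (d * fst p) by ring.
        replace (snd p - (1 - d) * snd p) with (d * snd p) by ring.
        rewrite !Rabs_mult, (Rabs_pos_eq d) by lra. fold A.
        replace (d * Rabs (fst p) + d * Rabs (snd p)) with (d * A) by (unfold A; ring).
        assert (d * A <= d * (A + 1)) by (apply Rmult_le_compat_l; lra). lra.
  - intros [e [He [Hr _]]]. destruct Hr as [t [Ht E]].
    destruct He; subst e.
    + rewrite E, tc_scale, tc_u in Htp. lra.
    + rewrite E, sc_scale, sc_w in Hsp. lra.
Qed.

Lemma rho_det a b : 0 < sc a -> 0 < sc b ->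
  det a b * det u w = (rho b - rho a) * (sc a * sc b * (det u w * det u w)).
Proof. intros. rewrite det_sc. unfold rho. field. split; lra. Qed.

Lemma Dsq : 0 < det u w * det u w.
Proof. pose proof HD. nra. Qed.

Lemma rho_lt_det a b : 0 < sc a -> 0 < sc b -> (rho a < rho b <-> 0 < det a b * det u w).
Proof.
  intros Ha Hb. rewrite (rho_det a b Ha Hb). pose proof Dsq.
  assert (0 < sc a * sc b * (det u w * det u w)) by (apply Rmult_lt_0_compat; nra).
  split; intro. nra. destruct (Rlt_or_le (rho a) (rho b)); auto. nra.
Qed.

Lemma rho_le_det a b : 0 < sc a -> 0 < sc b -> (rho a <= rho b <-> 0 <= det a b * det u w).
Proof.
  intros Ha Hb. rewrite (rho_det a b Ha Hb). pose proof Dsq.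
  assert (0 < sc a * sc b * (det u w * det u w)) by (apply Rmult_lt_0_compat; nra).
  split; intro. nra. destruct (Rle_or_lt (rho a) (rho b)); auto. nra.
Qed.

Lemma rhoV_mono k : rho (V k) < rho (V (k + 1)%Z).
Proof. apply rho_lt_det; auto. Qed.

Lemma near_glin c1 c2 p q e : 0 < e -> Defs.dist p q < e / (Rabs c1 + Rabs c2 + 1) ->
  Rabs (glin c1 c2 q - glin c1 c2 p) < e.
Proof.
  intros He Hd. pose proof (glin_diff c1 c2 p q).
  pose proof (Rabs_pos c1). pose proof (Rabs_pos c2).
  set (A := Rabs c1 + Rabs c2) in *. assert (0 <= A) by (unfold A; lra). clearbody A.
  assert (A * Defs.dist p q <= A * (e / (A + 1))) by (apply Rmult_le_compat_l; lra).
  assert (A * (e / (A + 1)) < e).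
  { apply Rmult_lt_reg_r with (A + 1). lra. unfold Rdiv. replace (A * (e * / (A + 1)) * (A + 1)) with (A * e) by (field; lra). nra. }
  lra.
Qed.

Lemma bdry_f p : boundary (hull_cone u w) p -> forall k, 1 <= fk k p.
Proof. intros Hb k. rewrite fk_glin. apply (bdry_glin _ _ _ _ _ Hb). intros q Hq. rewrite <- fk_glin. apply H_f; auto. Qed.
Lemma bdry_sc p : boundary (hull_cone u w) p -> 0 <= sc p.
Proof. intros Hb. rewrite sc_glin. apply (bdry_glin _ _ _ _ _ Hb). intros q Hq. rewrite <- sc_glin. apply H_sc; auto. Qed.
Lemma bdry_tc p : boundary (hull_cone u w) p -> 0 <= tc p.
Proof. intros Hb. rewrite tc_glin. apply (bdry_glin _ _ _ _ _ Hb). intros q Hq. rewrite <- tc_glin. apply H_tc; auto. Qed.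

Lemma det_glin_r a q : det a q = glin (- snd a) (fst a) q.
Proof. unfold det, glin. ring. Qed.
Lemma det_glin_l b q : det q b = glin (snd b) (- fst b) q.
Proof. unfold det, glin. ring. Qed.

Lemma glin_div c1 c2 d q : glin c1 c2 q / d = glin (c1 / d) (c2 / d) q.
Proof. unfold glin, Rdiv. ring. Qed.


Lemma up_bound r : 0 < r -> exists N : Z, (2 <= N)%Z /\ r < IZR N.
Proof.
  intros Hr. destruct (archimed r) as [H1 H2]. exists (Z.max 2 (up r)). split. lia.
  eapply Rlt_le_trans. apply H1. apply IZR_le. lia.
Qed.

Lemma sail_seg p : sail u w p -> exists k, seg k p.
Proof.
  intros [Hb _].
  pose proof (bdry_sc p Hb) as Hs. pose proof (bdry_tc p Hb) as Ht. pose proof (bdry_f p Hb) as Hf.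
  destruct Hs as [Hs|Hs].
  2:{ exfalso. assert (He : 0 < 1 / (tc p + 1)) by (apply Rdiv_lt_0_compat; lra).
      destruct (Hfw0 _ He) as [k Hk]. specialize (Hf k). rewrite fk_dec, <- Hs in Hf.
      assert (tc p * fk k w <= tc p * (1 / (tc p + 1))) by (apply Rmult_le_compat_l; lra).
      replace (tc p * (1 / (tc p + 1))) with (1 - 1 / (tc p + 1)) in H by (field; lra). lra. }
  destruct Ht as [Ht|Ht].
  2:{ exfalso. assert (He : 0 < 1 / (sc p + 1)) by (apply Rdiv_lt_0_compat; lra).
      destruct (Hfu0 _ He) as [k Hk]. specialize (Hf k). rewrite fk_dec, <- Ht in Hf.
      assert (sc p * fk k u <= sc p * (1 / (sc p + 1))) by (apply Rmult_le_compat_l; lra).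
      replace (sc p * (1 / (sc p + 1))) with (1 - 1 / (sc p + 1)) in H by (field; lra). lra. }
  assert (Hrp : 0 < rho p) by (unfold rho; apply Rdiv_lt_0_compat; auto).
  destruct (disc_ivt (fun k => rho (V k)) (rho p)) as [k [Hk1 Hk2]].
  { intro k. apply rhoV_mono. }
  { destruct (Hrho_dn _ Hrp) as [k Hk]. exists k. lra. }
  { apply Hrho_up. }
  simpl in Hk1, Hk2.
  apply rho_le_det in Hk1; auto. apply rho_lt_det in Hk2; auto.
  pose proof (HV_det k) as Hdk. pose proof (HV_det (k - 1)%Z) as Hdk'.
  replace (k - 1 + 1)%Z with k in Hdk' by lia.
  assert (Hdk0 : det (V k) (V (k + 1)%Z) <> 0) by (intro E; rewrite E in Hdk; lra).
  assert (Hdk0' : det (V (k - 1)%Z) (V k) <> 0) by (intro E; rewrite E in Hdk'; lra).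
  pose proof (coords _ _ p Hdk0) as Ep.
  remember (det p (V (k + 1)%Z) / det (V k) (V (k + 1)%Z)) as x eqn:Ex.
  remember (det (V k) p / det (V k) (V (k + 1)%Z)) as y eqn:Ey.
  assert (Hx : 0 < x).
  { rewrite Ex. replace (det p (V (k + 1)%Z) / det (V k) (V (k + 1)%Z))
      with ((det p (V (k + 1)%Z) * det u w) / (det (V k) (V (k + 1)%Z) * det u w)) by (field; auto).
    apply Rdiv_lt_0_compat; auto. }
  assert (Hy : 0 <= y).
  { rewrite Ey. replace (det (V k) p / det (V k) (V (k + 1)%Z))
      with ((det (V k) p * det u w) / (det (V k) (V (k + 1)%Z) * det u w)) by (field; auto).
    apply Rdiv_le_0_compat; auto. }
  assert (Hfp : fk k p = x + y) by (rewrite Ep, comb_fk, Hf1, Hf2; ring).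
  pose proof (Hf k) as Hxy. rewrite Hfp in Hxy.
  destruct (Req_dec (x + y) 1) as [E1|E1].
  { exists k. exists y. split. lra. rewrite Ep. replace x with (1 - y) by lra. f_equal; ring. }
  exfalso.
  set (dk := det (V k) (V (k + 1)%Z)) in *.
  set (dk' := det (V (k - 1)%Z) (V k)) in *.
  set (ax1 := snd (V (k + 1)%Z) / dk). set (ax2 := - fst (V (k + 1)%Z) / dk).
  set (ay1 := - snd (V k) / dk). set (ay2 := fst (V k) / dk).
  set (bx1 := snd (V k) / dk'). set (bx2 := - fst (V k) / dk').
  set (by1 := - snd (V (k - 1)%Z) / dk'). set (by2 := fst (V (k - 1)%Z) / dk').
  assert (Gx : forall q, det q (V (k + 1)%Z) / dk = glin ax1 ax2 q)
    by (intros; rewrite det_glin_l, glin_div; reflexivity).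
  assert (Gy : forall q, det (V k) q / dk = glin ay1 ay2 q)
    by (intros; rewrite det_glin_r, glin_div; reflexivity).
  assert (Gx' : forall q, det q (V k) / dk' = glin bx1 bx2 q)
    by (intros; rewrite det_glin_l, glin_div; reflexivity).
  assert (Gy' : forall q, det (V (k - 1)%Z) q / dk' = glin by1 by2 q)
    by (intros; rewrite det_glin_r, glin_div; reflexivity).
  destruct (up_bound (2 * (x + y))) as [N [HN2 HN]]. lra.
  set (m := Rmin (Rmin x (x - 1)) 1 / 2).
  destruct Hy as [Hy|Hy].
  -
    set (m1 := Rmin (Rmin x y) (x + y - 1) / 2).
    assert (Hm1 : 0 < m1) by (unfold m1; assert (0 < Rmin (Rmin x y) (x + y - 1)) by (repeat apply Rmin_glb_lt; lra); lra).
    assert (Hm1x : m1 <= x / 2) by (unfold m1; pose proof (Rmin_l (Rmin x y) (x + y - 1)); pose proof (Rmin_l x y); lra).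
    assert (Hm1y : m1 <= y / 2) by (unfold m1; pose proof (Rmin_l (Rmin x y) (x + y - 1)); pose proof (Rmin_r x y); lra).
    assert (Hm1s : m1 <= (x + y - 1) / 2) by (unfold m1; pose proof (Rmin_r (Rmin x y) (x + y - 1)); lra).
    set (eps := Rmin (m1 / (Rabs ax1 + Rabs ax2 + 1)) (m1 / (Rabs ay1 + Rabs ay2 + 1))).
    assert (Heps : 0 < eps).
    { unfold eps. pose proof (Rabs_pos ax1); pose proof (Rabs_pos ax2); pose proof (Rabs_pos ay1); pose proof (Rabs_pos ay2).
      apply Rmin_glb_lt; apply Rdiv_lt_0_compat; lra. }
    destruct (Hb eps Heps) as [_ [q [Hq Hdq]]].
    assert (Dx : Rabs (glin ax1 ax2 q - glin ax1 ax2 p) < m1).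
    { apply near_glin; auto. eapply Rlt_le_trans. apply Hdq. apply Rmin_l. }
    assert (Dy : Rabs (glin ay1 ay2 q - glin ay1 ay2 p) < m1).
    { apply near_glin; auto. eapply Rlt_le_trans. apply Hdq. apply Rmin_r. }
    rewrite <- !Gx in Dx. rewrite <- !Gy in Dy. rewrite <- Ex in Dx. rewrite <- Ey in Dy.
    apply Rabs_def2 in Dx. apply Rabs_def2 in Dy.
    apply Hq. rewrite (coords _ _ q Hdk0). fold dk.
    apply (region k N); try lia; lra.
  -
    rewrite <- Hy in Ep, Hxy, E1, Ey.
    assert (Hm : 0 < m) by (unfold m; assert (0 < Rmin (Rmin x (x - 1)) 1) by (repeat apply Rmin_glb_lt; lra); lra).
    assert (Hmx : m <= (x - 1) / 2) by (unfold m; pose proof (Rmin_l (Rmin x (x - 1)) 1); pose proof (Rmin_r x (x - 1)); lra).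
    assert (Hm1 : m <= 1 / 2) by (unfold m; pose proof (Rmin_r (Rmin x (x - 1)) 1); lra).
    set (eps := Rmin (Rmin (m / (Rabs ax1 + Rabs ax2 + 1)) (m / (Rabs ay1 + Rabs ay2 + 1)))
                     (Rmin (m / (Rabs bx1 + Rabs bx2 + 1)) (m / (Rabs by1 + Rabs by2 + 1)))).
    assert (Heps : 0 < eps).
    { unfold eps. pose proof (Rabs_pos ax1); pose proof (Rabs_pos ax2); pose proof (Rabs_pos ay1); pose proof (Rabs_pos ay2).
      pose proof (Rabs_pos bx1); pose proof (Rabs_pos bx2); pose proof (Rabs_pos by1); pose proof (Rabs_pos by2).
      repeat apply Rmin_glb_lt; apply Rdiv_lt_0_compat; lra. }
    destruct (Hb eps Heps) as [_ [q [Hq Hdq]]].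
    assert (Dx : Rabs (glin ax1 ax2 q - glin ax1 ax2 p) < m).
    { apply near_glin; auto. eapply Rlt_le_trans. apply Hdq. unfold eps. eapply Rle_trans; apply Rmin_l. }
    assert (Dy : Rabs (glin ay1 ay2 q - glin ay1 ay2 p) < m).
    { apply near_glin; auto. eapply Rlt_le_trans. apply Hdq. unfold eps. eapply Rle_trans. apply Rmin_l. apply Rmin_r. }
    assert (Dx' : Rabs (glin bx1 bx2 q - glin bx1 bx2 p) < m).
    { apply near_glin; auto. eapply Rlt_le_trans. apply Hdq. unfold eps. eapply Rle_trans. apply Rmin_r. apply Rmin_l. }
    assert (Dy' : Rabs (glin by1 by2 q - glin by1 by2 p) < m).
    { apply near_glin; auto. eapply Rlt_le_trans. apply Hdq. unfold eps. eapply Rle_trans; apply Rmin_r. }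
    assert (Px' : det p (V k) / dk' = 0).
    { rewrite Ep. unfold det; simpl. unfold Rdiv. ring. }
    assert (Py' : det (V (k - 1)%Z) p / dk' = x).
    { rewrite Ep. unfold dk'. unfold det at 1; simpl. unfold det in *. field. auto. }
    rewrite <- !Gx in Dx. rewrite <- !Gy in Dy. rewrite <- !Gx' in Dx'. rewrite <- !Gy' in Dy'.
    rewrite <- Ex in Dx. rewrite Px' in Dx'. rewrite Py' in Dy'.
    assert (Ey0 : det (V k) p / dk = 0) by (rewrite <- Ey; reflexivity).
    rewrite Ey0 in Dy.
    apply Rabs_def2 in Dx. apply Rabs_def2 in Dy. apply Rabs_def2 in Dx'. apply Rabs_def2 in Dy'.
    apply Hq.
    destruct (Rle_or_lt 0 (det (V k) q / dk)) as [Hyq|Hyq].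
    + rewrite (coords _ _ q Hdk0). fold dk. apply (region k N); try lia; lra.
    + assert (Hxq : 0 < det q (V k) / dk').
      { assert (E1' : det q (V k) / dk' * (dk' * det u w) = - (det (V k) q / dk) * (dk * det u w))
          by (unfold dk, dk', det; field; split; auto).
        destruct (Rlt_or_le 0 (det q (V k) / dk')) as [h|h]; auto.
        assert (det q (V k) / dk' * (dk' * det u w) <= 0) by nra.
        assert (0 < - (det (V k) q / dk) * (dk * det u w)) by (apply Rmult_lt_0_compat; lra).
        lra. }
      rewrite (coords _ _ q Hdk0'). fold dk'.
      pose proof (region (k - 1)%Z N (det q (V k) / dk') (det (V (k - 1)%Z) q / dk')) as HR.
      replace (k - 1 + 1)%Z with k in HR by lia. apply HR; try lia; lra.
Qed.


Theorem V_sv : sail_vertices u w V.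
Proof.
  split; [|split]; auto. intro p; split. apply sail_seg. intros [k Hk]. eapply seg_sail; eauto.
Qed.

Lemma kernel2 c1 c2 X Y : (c1 <> 0 \/ c2 <> 0) -> c1 * fst X + c2 * snd X = 0 ->
  c1 * fst Y + c2 * snd Y = 0 -> det X Y = 0.
Proof.
  intros Hc H1 H2. unfold det.
  assert (E1 : c1 * (fst X * snd Y - snd X * fst Y) = 0).
  { replace (c1 * (fst X * snd Y - snd X * fst Y)) with
      ((c1 * fst X + c2 * snd X) * snd Y - snd X * (c1 * fst Y + c2 * snd Y)) by ring.
    rewrite H1, H2. ring. }
  assert (E2 : c2 * (fst X * snd Y - snd X * fst Y) = 0).
  { replace (c2 * (fst X * snd Y - snd X * fst Y)) with
      (fst X * (c1 * fst Y + c2 * snd Y) - fst Y * (c1 * fst X + c2 * snd X)) by ring.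
    rewrite H1, H2. ring. }
  destruct Hc as [Hc|Hc]; [apply Rmult_integral in E1|apply Rmult_integral in E2]; tauto.
Qed.

Lemma par_trans Dl X Y : (fst Dl <> 0 \/ snd Dl <> 0) -> det Dl X = 0 -> det Dl Y = 0 -> det X Y = 0.
Proof.
  intros Hc H1 H2.
  assert (E1 : fst Dl * det X Y = fst X * det Dl Y - fst Y * det Dl X) by (unfold det; ring).
  assert (E2 : snd Dl * det X Y = snd X * det Dl Y - snd Y * det Dl X) by (unfold det; ring).
  rewrite H1, H2 in E1, E2.
  destruct Hc as [Hc|Hc]; [assert (fst Dl * det X Y = 0) by lra|assert (snd Dl * det X Y = 0) by lra];
    apply Rmult_integral in H; tauto.
Qed.

Lemma fk_nz m : IZR (fst (fc m)) <> 0 \/ IZR (snd (fc m)) <> 0.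
Proof.
  destruct (Req_dec (IZR (fst (fc m))) 0) as [h1|h1]; auto.
  destruct (Req_dec (IZR (snd (fc m))) 0) as [h2|h2]; auto.
  exfalso. pose proof (Hf1 m). unfold fk in H. rewrite h1, h2 in H. lra.
Qed.

Lemma fk_vsub m X Y : fk m (vsub X Y) = fk m X - fk m Y.
Proof. unfold fk, vsub; simpl. ring. Qed.

Lemma small_pos a b : 0 < a -> exists d, 0 < d <= 1 /\ forall d', 0 < d' <= d -> 0 < a + d' * b.
Proof.
  intros Ha. pose proof (Rabs_pos b).
  exists (Rmin 1 (a / (Rabs b + 1))). split.
  - split. apply Rmin_glb_lt. lra. apply Rdiv_lt_0_compat; lra. apply Rmin_l.
  - intros d' [Hd1 Hd2]. pose proof (Rmin_r 1 (a / (Rabs b + 1))).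
    assert (d' * Rabs b <= a / (Rabs b + 1) * Rabs b) by (apply Rmult_le_compat_r; lra).
    assert (a / (Rabs b + 1) * Rabs b < a).
    { apply Rmult_lt_reg_r with (Rabs b + 1). lra. unfold Rdiv.
      replace (a * / (Rabs b + 1) * Rabs b * (Rabs b + 1)) with (a * Rabs b) by (field; lra). nra. }
    pose proof (Rle_abs (- b)). rewrite Rabs_Ropp in H3.
    assert (- (d' * b) <= d' * Rabs b) by nra. lra.
Qed.

Lemma seg_det i Q : seg i Q -> 0 <= det (V i) Q * det u w /\ 0 <= det Q (V (i + 1)%Z) * det u w.
Proof.
  intros H. destruct (seg_param i Q H) as [t [Ht E]]. pose proof (HV_det i).
  assert (E1 : det (V i) Q = t * det (V i) (V (i + 1)%Z)) by (rewrite E; unfold det; simpl; ring).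
  assert (E2 : det Q (V (i + 1)%Z) = (1 - t) * det (V i) (V (i + 1)%Z)) by (rewrite E; unfold det; simpl; ring).
  rewrite E1, E2. split; nra.
Qed.

Lemma local_line m (Y X : pt) :
  0 < det (V m) Y * det u w -> 0 < det Y (V (m + 1)%Z) * det u w -> fk m Y = 1 ->
  (forall d, 0 < d <= 1 -> exists i, seg i (fst Y + d * (fst X - fst Y), snd Y + d * (snd X - snd Y))) ->
  fk m X = 1.
Proof.
  intros H1 H2 HY HX.
  destruct (small_pos _ (det (V m) (vsub X Y) * det u w) H1) as [d1 [Hd1 Hd1']].
  destruct (small_pos _ (det (vsub X Y) (V (m + 1)%Z) * det u w) H2) as [d2 [Hd2 Hd2']].
  set (d := Rmin d1 d2).
  assert (Hd : 0 < d <= 1) by (unfold d; split; [apply Rmin_glb_lt; lra| pose proof (Rmin_l d1 d2); lra]).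
  set (Q := (fst Y + d * (fst X - fst Y), snd Y + d * (snd X - snd Y))).
  destruct (HX d Hd) as [i Hi]. fold Q in Hi.
  assert (Q1 : 0 < det (V m) Q * det u w).
  { replace (det (V m) Q * det u w) with (det (V m) Y * det u w + d * (det (V m) (vsub X Y) * det u w))
      by (unfold Q, det, vsub; simpl; ring).
    apply Hd1'. split. lra. apply Rmin_l. }
  assert (Q2 : 0 < det Q (V (m + 1)%Z) * det u w).
  { replace (det Q (V (m + 1)%Z) * det u w) with (det Y (V (m + 1)%Z) * det u w + d * (det (vsub X Y) (V (m + 1)%Z) * det u w))
      by (unfold Q, det, vsub; simpl; ring).
    apply Hd2'. split. lra. apply Rmin_r. }
  destruct (seg_sc_pos i Q Hi) as [HsQ _]. destruct (seg_det i Q Hi) as [Hi1 Hi2].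
  apply rho_le_det in Hi1; auto. apply rho_le_det in Hi2; auto.
  apply rho_lt_det in Q1; auto. apply rho_lt_det in Q2; auto.
  assert (i = m).
  { destruct (Z.lt_total i m) as [h|[h|h]]; auto; exfalso.
    - pose proof (mono_le (fun k => rho (V k)) rhoV_mono (i + 1) m ltac:(lia)). simpl in H. lra.
    - pose proof (mono_le (fun k => rho (V k)) rhoV_mono (m + 1) i ltac:(lia)). simpl in H. lra. }
  subst i. pose proof (seg_fk m Q Hi) as HQ.
  replace (fk m Q) with (fk m Y + d * (fk m X - fk m Y)) in HQ by (unfold Q, fk; simpl; ring).
  rewrite HY in HQ. assert (d * (fk m X - 1) = 0) by lra.
  apply Rmult_integral in H. destruct H; lra.
Qed.

Lemma seg0 i : seg i (V i).
Proof. exists 0. split. lra. rewrite !Rmult_0_l, !Rplus_0_r. apply surjective_pairing. Qed.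

Lemma A_in_V (A : Z -> pt) : sail_vertices u w A -> forall k, exists m, A k = V m.
Proof.
  intros [HS [HC HO]] k.
  assert (HL : forall p, (exists i, in_segment (A i) (A (i + 1)%Z) p) -> exists i, seg i p)
    by (intros p Hp; apply sail_seg; apply HS; auto).
  destruct (HL (A k)) as [m Hm].
  { exists k. exists 0. split. lra. rewrite !Rmult_0_l, !Rplus_0_r. apply surjective_pairing. }
  destruct Hm as [t [Ht E]].
  destruct (Req_dec t 0) as [h0|h0].
  { exists m. rewrite E, h0, !Rmult_0_l, !Rplus_0_r. symmetry; apply surjective_pairing. }
  destruct (Req_dec t 1) as [h1|h1].
  { exists (m + 1)%Z. rewrite E, h1, !Rmult_1_l.
    replace (fst (V m) + (fst (V (m + 1)%Z) - fst (V m))) with (fst (V (m + 1)%Z)) by ring.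
    replace (snd (V m) + (snd (V (m + 1)%Z) - snd (V m))) with (snd (V (m + 1)%Z)) by ring.
    symmetry; apply surjective_pairing. }
  exfalso. pose proof (HV_det m) as Hm.
  assert (E1 : det (V m) (A k) = t * det (V m) (V (m + 1)%Z)) by (rewrite E; unfold det; simpl; ring).
  assert (E2 : det (A k) (V (m + 1)%Z) = (1 - t) * det (V m) (V (m + 1)%Z)) by (rewrite E; unfold det; simpl; ring).
  assert (S1 : 0 < det (V m) (A k) * det u w) by (rewrite E1; nra).
  assert (S2 : 0 < det (A k) (V (m + 1)%Z) * det u w) by (rewrite E2; nra).
  assert (Fk : fk m (A k) = 1) by (apply (seg_fk m); exists t; auto).
  assert (Fn : fk m (A (k + 1)%Z) = 1).
  { apply (local_line m (A k)); auto. intros d Hd. apply HL. exists k. exists d. split. lra. reflexivity. }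
  assert (Fp : fk m (A (k - 1)%Z) = 1).
  { apply (local_line m (A k)); auto. intros d Hd. apply HL. exists (k - 1)%Z. exists (1 - d).
    split. lra. replace (k - 1 + 1)%Z with k by lia. f_equal; ring. }
  apply (HC k). apply (kernel2 (IZR (fst (fc m))) (IZR (snd (fc m)))). apply fk_nz.
  - change (fk m (vsub (A (k - 1)%Z) (A k)) = 0). rewrite fk_vsub. lra.
  - change (fk m (vsub (A (k + 1)%Z) (A k)) = 0). rewrite fk_vsub. lra.
Qed.

Lemma V_in_A (A : Z -> pt) : sail_vertices u w A -> forall m, exists k, A k = V m.
Proof.
  intros HA m. pose proof (A_in_V A HA) as HAV. destruct HA as [HS [HC HO]].
  destruct (proj1 (HS (V m))) as [k Hk]. { apply (seg_sail m). apply seg0. }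
  destruct Hk as [t [Ht E]].
  destruct (Req_dec t 0) as [h0|h0].
  { exists k. rewrite E, h0, !Rmult_0_l, !Rplus_0_r. apply surjective_pairing. }
  destruct (Req_dec t 1) as [h1|h1].
  { exists (k + 1)%Z. rewrite E, h1, !Rmult_1_l.
    replace (fst (A k) + (fst (A (k + 1)%Z) - fst (A k))) with (fst (A (k + 1)%Z)) by ring.
    replace (snd (A k) + (snd (A (k + 1)%Z) - snd (A k))) with (snd (A (k + 1)%Z)) by ring.
    apply surjective_pairing. }
  exfalso.
  destruct (HAV k) as [i Ei]. destruct (HAV (k + 1)%Z) as [i' Ei'].
  assert (Hfm : forall j, fk j (V m) = 1 -> fk j (A k) = 1 /\ fk j (A (k + 1)%Z) = 1).
  { intros j Hj. rewrite E in Hj. unfold fk in Hj; simpl in Hj.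
    assert (P1 : 1 <= fk j (A k)) by (rewrite Ei; apply Pt_f, V_Pt).
    assert (P2 : 1 <= fk j (A (k + 1)%Z)) by (rewrite Ei'; apply Pt_f, V_Pt).
    unfold fk in *.
    replace (IZR (fst (fc j)) * (fst (A k) + t * (fst (A (k + 1)%Z) - fst (A k))) +
             IZR (snd (fc j)) * (snd (A k) + t * (snd (A (k + 1)%Z) - snd (A k))))
      with ((1 - t) * (IZR (fst (fc j)) * fst (A k) + IZR (snd (fc j)) * snd (A k)) +
            t * (IZR (fst (fc j)) * fst (A (k + 1)%Z) + IZR (snd (fc j)) * snd (A (k + 1)%Z))) in Hj by ring.
    set (a1 := IZR (fst (fc j)) * fst (A k) + IZR (snd (fc j)) * snd (A k)) in *.
    set (a2 := IZR (fst (fc j)) * fst (A (k + 1)%Z) + IZR (snd (fc j)) * snd (A (k + 1)%Z)) in *.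
    assert (0 <= (1 - t) * (a1 - 1)) by (apply Rmult_le_pos; lra).
    assert (0 <= t * (a2 - 1)) by (apply Rmult_le_pos; lra).
    assert ((1 - t) * (a1 - 1) = 0) by lra. assert (t * (a2 - 1) = 0) by lra.
    apply Rmult_integral in H1. apply Rmult_integral in H2. split.
    destruct H1; lra. destruct H2; lra. }
  destruct (Hfm m (Hf1 m)) as [F1 F2].
  assert (Hm1 : fk (m - 1)%Z (V m) = 1) by (pose proof (Hf2 (m - 1)%Z); replace (m - 1 + 1)%Z with m in H by lia; auto).
  destruct (Hfm (m - 1)%Z Hm1) as [G1 G2].
  set (Dl := vsub (A (k + 1)%Z) (A k)).
  assert (HDl : fst Dl <> 0 \/ snd Dl <> 0).
  { destruct (Req_dec (fst Dl) 0) as [a|a]; auto. destruct (Req_dec (snd Dl) 0) as [b|b]; auto.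
    exfalso. pose proof (HO k). unfold Dl, vsub in a, b; simpl in a, b.
    unfold det in H.
    replace (fst (A (k + 1)%Z)) with (fst (A k)) in H by lra.
    replace (snd (A (k + 1)%Z)) with (snd (A k)) in H by lra. lra. }
  assert (K1 : det Dl (vsub (V (m + 1)%Z) (V m)) = 0).
  { apply (kernel2 (IZR (fst (fc m))) (IZR (snd (fc m)))). apply fk_nz.
    - change (fk m Dl = 0). unfold Dl. rewrite fk_vsub. lra.
    - change (fk m (vsub (V (m + 1)%Z) (V m)) = 0). rewrite fk_vsub, Hf1, Hf2. lra. }
  assert (K2 : det Dl (vsub (V (m - 1)%Z) (V m)) = 0).
  { apply (kernel2 (IZR (fst (fc (m - 1)%Z))) (IZR (snd (fc (m - 1)%Z)))). apply fk_nz.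
    - change (fk (m - 1)%Z Dl = 0). unfold Dl. rewrite fk_vsub. lra.
    - change (fk (m - 1)%Z (vsub (V (m - 1)%Z) (V m)) = 0). rewrite fk_vsub, Hf1, Hm1. lra. }
  apply (Hcol m). apply (par_trans Dl); auto.
Qed.

Theorem sail_unique (A : Z -> pt) : sail_vertices u w A -> exists c, forall k, A k = V (k + c).
Proof.
  intros HA. pose proof (A_in_V A HA) as HAV. pose proof (V_in_A A HA) as HVA.
  destruct (HAV 0%Z) as [c Hc]. exists c.
  assert (HsA : forall k, 0 < sc (A k)) by (intro k; destruct (HAV k) as [m ->]; auto).
  assert (rhoA : forall k, rho (A k) < rho (A (k + 1)%Z)).
  { intro k. apply rho_lt_det; auto. destruct HA as [_ [_ HO]]. auto. }
  assert (MV := mono_rev_lt (fun k => rho (V k)) rhoV_mono).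
  assert (MA := mono_rev_lt (fun k => rho (A k)) rhoA).
  assert (MV' := mono_lt (fun k => rho (V k)) rhoV_mono).
  simpl in MV, MA, MV'.
  assert (Up : forall n : nat, A (Z.of_nat n) = V (Z.of_nat n + c)).
  { induction n. simpl. auto.
    destruct (HAV (Z.of_nat (S n))) as [m' Hm'].
    assert (h1 : (Z.of_nat n + c < m')%Z).
    { apply MV. rewrite <- IHn, <- Hm'. replace (Z.of_nat (S n)) with (Z.of_nat n + 1)%Z by lia. apply rhoA. }
    destruct (Z.eq_dec m' (Z.of_nat n + c + 1)) as [e|e].
    { rewrite Hm', e. f_equal. lia. }
    exfalso. destruct (HVA (Z.of_nat n + c + 1)%Z) as [k'' Hk''].
    assert (Z.of_nat n < k'')%Z.
    { apply MA. rewrite IHn, Hk''. apply MV'. lia. }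
    assert (k'' < Z.of_nat (S n))%Z.
    { apply MA. rewrite Hm', Hk''. apply MV'. lia. }
    lia. }
  assert (Dn : forall n : nat, A (- Z.of_nat n)%Z = V (- Z.of_nat n + c)%Z).
  { induction n. simpl. auto.
    destruct (HAV (- Z.of_nat (S n))%Z) as [m' Hm'].
    assert (h1 : (m' < - Z.of_nat n + c)%Z).
    { apply MV. rewrite <- IHn, <- Hm'.
      pose proof (rhoA (- Z.of_nat (S n))%Z). replace (- Z.of_nat (S n) + 1)%Z with (- Z.of_nat n)%Z in H by lia. auto. }
    destruct (Z.eq_dec m' (- Z.of_nat n + c - 1)) as [e|e].
    { rewrite Hm', e. f_equal. lia. }
    exfalso. destruct (HVA (- Z.of_nat n + c - 1)%Z) as [k'' Hk''].
    assert (k'' < - Z.of_nat n)%Z.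
    { apply MA. rewrite IHn, Hk''. apply MV'. lia. }
    assert (- Z.of_nat (S n) < k'')%Z.
    { apply MA. rewrite Hm', Hk''. apply MV'. lia. }
    lia. }
  intro k. destruct (Z_le_gt_dec 0 k).
  - replace k with (Z.of_nat (Z.to_nat k)) by lia. apply Up.
  - replace k with (- Z.of_nat (Z.to_nat (- k)))%Z by lia. apply Dn.
Qed.

End Geo.


Lemma Zind1 (P : Z -> Prop) : P 0%Z -> (forall k, P k -> P (k + 1)%Z) -> (forall k, P k -> P (k - 1)%Z) -> forall k, P k.
Proof.
  intros H0 Hu Hd.
  assert (U : forall n : nat, P (Z.of_nat n)).
  { induction n. auto. replace (Z.of_nat (S n)) with (Z.of_nat n + 1)%Z by lia. auto. }
  assert (D : forall n : nat, P (- Z.of_nat n)%Z).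
  { induction n. auto. replace (- Z.of_nat (S n))%Z with (- Z.of_nat n - 1)%Z by lia. auto. }
  intro k. destruct (Z_le_gt_dec 0 k).
  - replace k with (Z.of_nat (Z.to_nat k)) by lia. auto.
  - replace k with (- Z.of_nat (Z.to_nat (- k)))%Z by lia. auto.
Qed.

Lemma Zind2 (P : Z -> Prop) : P (-1)%Z -> P 0%Z -> (forall k, P (k - 1)%Z -> P k -> P (k + 1)%Z) ->
  (forall k, P k -> P (k + 1)%Z -> P (k - 1)%Z) -> forall k, P k.
Proof.
  intros Hm H0 Hu Hd.
  assert (H : forall k, P (k - 1)%Z /\ P k).
  { apply (Zind1 (fun k => P (k - 1)%Z /\ P k)).
    - split; auto.
    - intros k [A B]. split. replace (k + 1 - 1)%Z with k by lia. auto. auto.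
    - intros k [A B]. split; [|auto]. apply Hd. auto. replace (k - 1 + 1)%Z with k by lia. auto. }
  intro k. apply H.
Qed.

Lemma Zup2 (P : Z -> Prop) : P (-1)%Z -> P 0%Z -> (forall k, (0 <= k)%Z -> P (k - 1)%Z -> P k -> P (k + 1)%Z) ->
  forall k, (-1 <= k)%Z -> P k.
Proof.
  intros Hm H0 Hu.
  assert (U : forall n : nat, P (Z.of_nat n - 1)%Z /\ P (Z.of_nat n)).
  { induction n. simpl; auto. destruct IHn as [A B]. split.
    replace (Z.of_nat (S n) - 1)%Z with (Z.of_nat n) by lia. auto.
    replace (Z.of_nat (S n)) with (Z.of_nat n + 1)%Z by lia. apply Hu; auto. lia. }
  intros k Hk. destruct (Z.eq_dec k (-1)). subst; auto.
  replace k with (Z.of_nat (Z.to_nat k)) by lia. apply U.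
Qed.

Lemma Zdn2 (P : Z -> Prop) : P (-1)%Z -> P 0%Z -> (forall k, (k <= -1)%Z -> P k -> P (k + 1)%Z -> P (k - 1)%Z) ->
  forall k, (k <= 0)%Z -> P k.
Proof.
  intros Hm H0 Hd.
  assert (U : forall n : nat, P (- Z.of_nat n - 1)%Z /\ P (- Z.of_nat n)%Z).
  { induction n. simpl; auto. destruct IHn as [A B]. split.
    replace (- Z.of_nat (S n) - 1)%Z with (- Z.of_nat n - 1 - 1)%Z by lia. apply Hd. lia. auto.
    replace (- Z.of_nat n - 1 + 1)%Z with (- Z.of_nat n)%Z by lia. auto.
    replace (- Z.of_nat (S n))%Z with (- Z.of_nat n - 1)%Z by lia. auto. }
  intros k Hk. replace k with (- Z.of_nat (Z.to_nat (- k)))%Z by lia. apply U.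
Qed.

Lemma Zshift_dn (P : Z -> Prop) (n b : Z) : (0 < n)%Z -> (forall k, (b <= k)%Z -> P k) ->
  (forall k, P (k + n)%Z -> P k) -> forall k, P k.
Proof.
  intros Hn Hb Hs.
  assert (forall m : nat, forall k, (b - Z.of_nat m * n <= k)%Z -> P k).
  { induction m; intros k Hk. apply Hb. lia. destruct (Z_le_gt_dec b k). apply Hb; auto.
    apply Hs. apply IHm. lia. }
  intro k. apply (H (Z.to_nat (b - k))). destruct (Z_le_gt_dec b k). lia.
  rewrite Z2Nat.id by lia. nia.
Qed.

Lemma Zshift_up (P : Z -> Prop) (n b : Z) : (0 < n)%Z -> (forall k, (k <= b)%Z -> P k) ->
  (forall k, P k -> P (k + n)%Z) -> forall k, P k.
Proof.
  intros Hn Hb Hs.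
  assert (forall m : nat, forall k, (k <= b + Z.of_nat m * n)%Z -> P k).
  { induction m; intros k Hk. apply Hb. lia. destruct (Z_le_gt_dec k b). apply Hb; auto.
    replace k with (k - n + n)%Z by lia. apply Hs. apply IHm. lia. }
  intro k. apply (H (Z.to_nat (k - b))). destruct (Z_le_gt_dec k b). lia.
  rewrite Z2Nat.id by lia. nia.
Qed.

Definition sgZ (k : Z) : Z := if Z.even k then 1%Z else (-1)%Z.
Definition sg (k : Z) : R := IZR (sgZ k).

Lemma sg_succ k : sg (k + 1) = - sg k.
Proof.
  unfold sg, sgZ. rewrite Z.even_add. simpl. destruct (Z.even k); simpl; lra.
Qed.
Lemma sg_add k l : sg (k + l) = sg k * sg l.
Proof.
  unfold sg, sgZ. rewrite Z.even_add. destruct (Z.even k), (Z.even l); simpl; lra.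
Qed.
Lemma sg_sq k : sg k * sg k = 1.
Proof. unfold sg, sgZ. destruct (Z.even k); simpl; lra. Qed.
Lemma sg_2k k : sg (2 * k) = 1.
Proof. unfold sg, sgZ. rewrite Z.even_mul. simpl. reflexivity. Qed.
Lemma sg_cases k : sg k = 1 \/ sg k = -1.
Proof. unfold sg, sgZ. destruct (Z.even k); simpl; auto. Qed.

Lemma act_mmul A B p : act (mmul A B) p = act A (act B p).
Proof. unfold act, mmul; simpl. rewrite !plus_IZR, !mult_IZR. f_equal; ring. Qed.

Lemma firstn_S_app {X} (l : list X) m d : (m < length l)%nat -> firstn (S m) l = firstn m l ++ [nth m l d].
Proof.
  revert m. induction l; intros m Hm; simpl in *. lia.
  destruct m. reflexivity. simpl. f_equal. apply IHl. lia.
Qed.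

Section Conc.
Variable a : list Z.
Hypothesis Hn : (0 < length a)%nat.
Hypothesis Hpos : Forall (fun x => (0 < x)%Z) a.

Definition nn : Z := Z.of_nat (length a).
Definition aa (k : Z) : Z := nth (Z.to_nat ((k - 1) mod nn)) a 0%Z.

Lemma nn_pos : (0 < nn)%Z.
Proof. unfold nn. lia. Qed.

Lemma aa_pos k : (1 <= aa k)%Z.
Proof.
  unfold aa. pose proof nn_pos. pose proof (Z.mod_pos_bound (k - 1) nn H).
  assert (Z.to_nat ((k - 1) mod nn) < length a)%nat by (unfold nn in *; lia).
  rewrite Forall_nth in Hpos. specialize (Hpos _ 0%Z H1). lia.
Qed.

Lemma aa_per k : aa (k + nn) = aa k.
Proof.
  unfold aa. f_equal. f_equal. replace (k + nn - 1)%Z with (k - 1 + 1 * nn)%Z by ring.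
  rewrite Z_mod_plus_full. reflexivity.
Qed.

Lemma aa_nth i : (i < length a)%nat -> aa (Z.of_nat i + 1) = nth i a 0%Z.
Proof.
  intros Hi. unfold aa. replace (Z.of_nat i + 1 - 1)%Z with (Z.of_nat i) by ring.
  rewrite Z.mod_small by (unfold nn; lia). rewrite Nat2Z.id. auto.
Qed.

Fixpoint Fw (m : nat) : (Z * Z) * (Z * Z) :=
  match m with
  | Datatypes.O => ((1, 0), (0, 1))%Z
  | S m' => let '(p, q) := Fw m' in
            (q, (fst p + aa (Z.of_nat m' + 1) * fst q, snd p + aa (Z.of_nat m' + 1) * snd q))%Z
  end.

Fixpoint Bw (m : nat) : (Z * Z) * (Z * Z) :=
  match m with
  | Datatypes.O => ((1, 0), (0, 1))%Z
  | S m' => let '(p, q) := Bw m' in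
            ((fst q - aa (- Z.of_nat m') * fst p, snd q - aa (- Z.of_nat m') * snd p), p)%Z
  end.

Definition vZ (k : Z) : Z * Z :=
  if (0 <=? k)%Z then snd (Fw (Z.to_nat k)) else fst (Bw (Z.to_nat (- k - 1))).

Lemma Fw_fst m : fst (Fw m) = vZ (Z.of_nat m - 1).
Proof.
  destruct m. reflexivity.
  unfold vZ. replace (0 <=? Z.of_nat (S m) - 1)%Z with true by (symmetry; apply Z.leb_le; lia).
  replace (Z.to_nat (Z.of_nat (S m) - 1)) with m by lia.
  simpl. destruct (Fw m). reflexivity.
Qed.

Lemma Bw_snd m : snd (Bw m) = vZ (- Z.of_nat m).
Proof.
  destruct m. reflexivity.
  unfold vZ. replace (0 <=? - Z.of_nat (S m))%Z with false by (symmetry; apply Z.leb_gt; lia).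
  replace (Z.to_nat (- - Z.of_nat (S m) - 1)) with m by lia.
  simpl. destruct (Bw m). reflexivity.
Qed.

Lemma vZ_rec k : vZ (k + 1) = (fst (vZ (k - 1)) + aa (k + 1) * fst (vZ k), snd (vZ (k - 1)) + aa (k + 1) * snd (vZ k))%Z.
Proof.
  destruct (Z_le_gt_dec 0 k).
  - assert (E : vZ (k + 1) = snd (Fw (S (Z.to_nat k)))).
    { unfold vZ. replace (0 <=? k + 1)%Z with true by (symmetry; apply Z.leb_le; lia).
      f_equal. f_equal. lia. }
    rewrite E. simpl. pose proof (Fw_fst (Z.to_nat k)) as E1.
    assert (E2 : snd (Fw (Z.to_nat k)) = vZ k).
    { unfold vZ. replace (0 <=? k)%Z with true by (symmetry; apply Z.leb_le; lia). auto. }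
    destruct (Fw (Z.to_nat k)) as [p q]. simpl in *. rewrite Z2Nat.id in E1 by lia.
    subst. rewrite Z2Nat.id by lia. reflexivity.
  - set (m := Z.to_nat (- k - 1)).
    assert (Ek : k = (- Z.of_nat m - 1)%Z) by (unfold m; lia).
    assert (E : vZ (k - 1) = fst (Bw (S m))).
    { unfold vZ. replace (0 <=? k - 1)%Z with false by (symmetry; apply Z.leb_gt; lia).
      f_equal. f_equal. unfold m. lia. }
    assert (E1 : fst (Bw m) = vZ k).
    { unfold vZ. replace (0 <=? k)%Z with false by (symmetry; apply Z.leb_gt; lia). auto. }
    pose proof (Bw_snd m) as E2. replace (- Z.of_nat m)%Z with (k + 1)%Z in E2 by lia.
    simpl in E. destruct (Bw m) as [p q]. simpl in *. subst p q.
    rewrite E. simpl. replace (- Z.of_nat m)%Z with (k + 1)%Z by lia.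
    rewrite (surjective_pairing (vZ (k + 1))) at 1. f_equal; ring.
Qed.

Lemma vZ_m1 : vZ (-1) = (1, 0)%Z.
Proof. reflexivity. Qed.
Lemma vZ_0 : vZ 0 = (0, 1)%Z.
Proof. reflexivity. Qed.


Lemma Mprod_firstn m : (m <= length a)%nat ->
  Mprod (firstn m a) = Mat (fst (vZ (Z.of_nat m - 1))) (fst (vZ (Z.of_nat m)))
                           (snd (vZ (Z.of_nat m - 1))) (snd (vZ (Z.of_nat m))).
Proof.
  induction m; intros Hm. reflexivity.
  rewrite (firstn_S_app a m 0%Z) by lia. unfold Mprod. rewrite fold_left_app. cbn [fold_left].
  change (fold_left (fun M x => mmul M (elem x)) (firstn m a) mid) with (Mprod (firstn m a)).
  rewrite IHm by lia. unfold mmul, elem; cbn [m11 m12 m21 m22].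
  replace (Z.of_nat (S m)) with (Z.of_nat m + 1)%Z by lia.
  rewrite vZ_rec, aa_nth by lia. cbn [fst snd].
  replace (Z.of_nat m + 1 - 1)%Z with (Z.of_nat m) by lia. f_equal; ring.
Qed.

Lemma Mprod_eq : Mprod a = Mat (fst (vZ (nn - 1))) (fst (vZ nn)) (snd (vZ (nn - 1))) (snd (vZ nn)).
Proof. rewrite <- (firstn_all a) at 1. apply Mprod_firstn. lia. Qed.

Definition vR (k : Z) : pt := (IZR (fst (vZ k)), IZR (snd (vZ k))).
Definition aR (k : Z) : R := IZR (aa k).
Definition r11 := IZR (fst (vZ (nn - 1))).
Definition r12 := IZR (fst (vZ nn)).
Definition r21 := IZR (snd (vZ (nn - 1))).
Definition r22 := IZR (snd (vZ nn)).

Lemma aR_pos k : 1 <= aR k.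
Proof. unfold aR. apply IZR_le. apply aa_pos. Qed.
Lemma aR_per k : aR (k + nn) = aR k.
Proof. unfold aR. rewrite aa_per. auto. Qed.

Lemma vR_rec k : vR (k + 1) = (fst (vR (k - 1)) + aR (k + 1) * fst (vR k), snd (vR (k - 1)) + aR (k + 1) * snd (vR k)).
Proof. unfold vR, aR. rewrite vZ_rec. simpl. rewrite !plus_IZR, !mult_IZR. auto. Qed.

Lemma vR_rec' k : vR (k - 1) = (fst (vR (k + 1)) - aR (k + 1) * fst (vR k), snd (vR (k + 1)) - aR (k + 1) * snd (vR k)).
Proof. rewrite (vR_rec k). cbn [fst snd]. unfold vR. cbn [fst snd]. f_equal; ring. Qed.

Lemma vR_m1 : vR (-1) = (1, 0).
Proof. reflexivity. Qed.
Lemma vR_0 : vR 0 = (0, 1).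
Proof. reflexivity. Qed.

Lemma act_M p : act (Mprod a) p = (r11 * fst p + r12 * snd p, r21 * fst p + r22 * snd p).
Proof. rewrite Mprod_eq. reflexivity. Qed.

Lemma M_v k : act (Mprod a) (vR k) = vR (k + nn).
Proof.
  apply (Zind2 (fun k => act (Mprod a) (vR k) = vR (k + nn))).
  - rewrite act_M, vR_m1. cbn [fst snd]. replace (-1 + nn)%Z with (nn - 1)%Z by ring.
    unfold vR, r11, r21. f_equal; ring.
  - rewrite act_M, vR_0. cbn [fst snd]. replace (0 + nn)%Z with nn by ring.
    unfold vR, r12, r22. f_equal; ring.
  - intros j H1 H2. replace (j + 1 + nn)%Z with (j + nn + 1)%Z by ring.
    rewrite (vR_rec (j + nn)). replace (j + nn - 1)%Z with (j - 1 + nn)%Z by ring.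
    rewrite <- H1, <- H2. replace (j + nn + 1)%Z with (j + 1 + nn)%Z by ring. rewrite aR_per.
    rewrite vR_rec, !act_M. simpl. f_equal; ring.
  - intros j H1 H2. replace (j - 1 + nn)%Z with (j + nn - 1)%Z by ring.
    rewrite (vR_rec' (j + nn)). replace (j + nn + 1)%Z with (j + 1 + nn)%Z by ring.
    rewrite <- H1, <- H2. rewrite aR_per.
    rewrite vR_rec', !act_M. simpl. f_equal; ring.
Qed.

Lemma det_v k : det (vR (k - 1)) (vR k) = sg k.
Proof.
  apply (Zind1 (fun k => det (vR (k - 1)) (vR k) = sg k)).
  - unfold det, vR, sg, sgZ. simpl. lra.
  - intros j H. replace (j + 1 - 1)%Z with j by ring. transitivity (- det (vR (j - 1)) (vR j)).
    rewrite vR_rec. unfold det; simpl. ring. rewrite H, sg_succ. ring.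
  - intros j H. replace (j - 1 - 1)%Z with (j - 1 - 1)%Z by ring.
    rewrite (vR_rec' (j - 1)). replace (j - 1 + 1)%Z with j by ring.
    transitivity (- det (vR (j - 1)) (vR j)). unfold det; simpl. ring.
    rewrite H. pose proof (sg_succ (j - 1)). replace (j - 1 + 1)%Z with j in H0 by ring. rewrite H0. ring.
Qed.

Lemma vpos (m : nat) :
  (0 <= fst (vZ (Z.of_nat m - 1)) /\ 0 <= fst (vZ (Z.of_nat m)) /\ 1 <= fst (vZ (Z.of_nat m - 1)) + fst (vZ (Z.of_nat m)) /\
   0 <= snd (vZ (Z.of_nat m - 1)) /\ 1 <= snd (vZ (Z.of_nat m)))%Z.
Proof.
  induction m.
  - compute. intuition discriminate.
  - destruct IHm as [A [B [C [D E]]]].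
    replace (Z.of_nat (S m)) with (Z.of_nat m + 1)%Z by lia.
    replace (Z.of_nat m + 1 - 1)%Z with (Z.of_nat m) by ring.
    rewrite vZ_rec. cbn [fst snd]. pose proof (aa_pos (Z.of_nat m + 1)). nia.
Qed.

Lemma r11_nn : 0 <= r11.
Proof.
  unfold r11. apply IZR_le. pose proof (vpos (Z.to_nat (nn - 1))) as H.
  rewrite Z2Nat.id in H by (pose proof nn_pos; lia). tauto.
Qed.
Lemma r21_pos : 1 <= r21.
Proof.
  unfold r21. apply IZR_le. pose proof (vpos (Z.to_nat (nn - 1))) as H.
  rewrite Z2Nat.id in H by (pose proof nn_pos; lia). tauto.
Qed.
Lemma r22_pos : 1 <= r22.
Proof.
  unfold r22. apply IZR_le. pose proof (vpos (Z.to_nat nn)) as H.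
  rewrite Z2Nat.id in H by (pose proof nn_pos; lia). tauto.
Qed.
Lemma r12_pos : 1 <= r12.
Proof.
  unfold r12. apply IZR_le. pose proof (vpos (Z.to_nat (nn - 1))) as H.
  rewrite Z2Nat.id in H by (pose proof nn_pos; lia).
  replace nn with (nn - 1 + 1)%Z by ring. rewrite vZ_rec. simpl.
  pose proof (aa_pos (nn - 1 + 1)). nia.
Qed.


Definition tt := r11 + r22.
Definition dM := r11 * r22 - r12 * r21.
Definition Dl := (r11 - r22) * (r11 - r22) + 4 * r12 * r21.
Definition sq := sqrt Dl.
Definition lam := (tt - sq) / 2.
Definition mu := (tt + sq) / 2.
Definition u0 : pt := (r12, lam - r11).
Definition w0 : pt := (r12, mu - r11).

Lemma dM_sg : dM = sg nn.
Proof. rewrite <- det_v. unfold det, dM, vR, r11, r12, r21, r22. simpl. ring. Qed.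

Lemma dM_sq : dM * dM = 1.
Proof. rewrite dM_sg. apply sg_sq. Qed.

Lemma Dl_pos : 0 < Dl.
Proof. unfold Dl. pose proof r12_pos. pose proof r21_pos. pose proof (Rle_0_sqr (r11 - r22)). unfold Rsqr in *.
  assert (1 <= r12 * r21) by nra. lra. Qed.

Lemma sq_sq : sq * sq = Dl.
Proof. unfold sq. apply sqrt_sqrt. left. apply Dl_pos. Qed.

Lemma sq_gt : Rabs (r11 - r22) < sq.
Proof.
  unfold sq. rewrite <- sqrt_Rsqr_abs. apply sqrt_lt_1_alt. unfold Rsqr, Dl.
  pose proof r12_pos. pose proof r21_pos. pose proof (Rle_0_sqr (r11 - r22)). unfold Rsqr in *.
  assert (1 <= r12 * r21) by nra. split; lra.
Qed.

Lemma lam_lt_r11 : lam < r11.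
Proof. unfold lam, tt. pose proof sq_gt. pose proof (Rle_abs (- (r11 - r22))). rewrite Rabs_Ropp in H0. lra. Qed.
Lemma mu_gt_r11 : r11 < mu.
Proof. unfold mu, tt. pose proof sq_gt. pose proof (Rle_abs (r11 - r22)). lra. Qed.

Lemma lam_mu : lam * mu = dM.
Proof.
  unfold lam, mu. replace ((tt - sq) / 2 * ((tt + sq) / 2)) with ((tt * tt - sq * sq) / 4) by field.
  rewrite sq_sq. unfold tt, Dl, dM. field.
Qed.

Lemma sq_pos : 0 < sq.
Proof. pose proof sq_gt. pose proof (Rabs_pos (r11 - r22)). lra. Qed.

Lemma mu_pos : 0 < mu.
Proof. unfold mu, tt. pose proof sq_pos. pose proof r11_nn. pose proof r22_pos. lra. Qed.

Lemma lam_abs_mu : Rabs lam * mu = 1.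
Proof.
  rewrite <- (Rabs_pos_eq mu) by (left; apply mu_pos). rewrite <- Rabs_mult, lam_mu, dM_sg.
  destruct (sg_cases nn) as [h|h]; rewrite h; unfold Rabs; destruct (Rcase_abs _); lra.
Qed.

Lemma lam_lt_mu : Rabs lam < mu.
Proof.
  apply Rabs_def1.
  - unfold lam, mu. pose proof sq_pos. lra.
  - unfold lam, mu, tt. pose proof r11_nn. pose proof r22_pos. lra.
Qed.

Lemma mu_gt1 : 1 < mu.
Proof.
  pose proof lam_abs_mu. pose proof lam_lt_mu. pose proof mu_pos. pose proof (Rabs_pos lam).
  destruct (Rlt_or_le 1 mu) as [h|h]; auto. nra.
Qed.

Lemma lam_abs : Rabs lam < 1.
Proof. pose proof lam_abs_mu. pose proof mu_gt1. pose proof (Rabs_pos lam). nra. Qed.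

Lemma lam_nz : lam <> 0.
Proof. intro h. pose proof lam_abs_mu. rewrite h, Rabs_R0 in H. lra. Qed.

Lemma lam_quad : lam * lam - tt * lam + dM = 0.
Proof.
  unfold lam. replace ((tt - sq) / 2 * ((tt - sq) / 2) - tt * ((tt - sq) / 2) + dM)
    with ((sq * sq - tt * tt + 4 * dM) / 4) by field. rewrite sq_sq. unfold Dl, tt, dM. field.
Qed.
Lemma mu_quad : mu * mu - tt * mu + dM = 0.
Proof.
  unfold mu. replace ((tt + sq) / 2 * ((tt + sq) / 2) - tt * ((tt + sq) / 2) + dM)
    with ((sq * sq - tt * tt + 4 * dM) / 4) by field. rewrite sq_sq. unfold Dl, tt, dM. field.
Qed.

Lemma Mu0 : act (Mprod a) u0 = vscale lam u0.
Proof.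
  rewrite act_M. unfold u0, vscale; simpl. pose proof lam_quad. unfold tt, dM in H. f_equal; nra.
Qed.
Lemma Mw0 : act (Mprod a) w0 = vscale mu w0.
Proof.
  rewrite act_M. unfold w0, vscale; simpl. pose proof mu_quad. unfold tt, dM in H. f_equal; nra.
Qed.

Lemma det_act p q : det (act (Mprod a) p) (act (Mprod a) q) = dM * det p q.
Proof. rewrite !act_M. unfold det, dM; simpl. ring. Qed.

Lemma D0 : det u0 w0 = r12 * (mu - lam).
Proof. unfold det, u0, w0; simpl. ring. Qed.
Lemma D0_pos : 0 < det u0 w0.
Proof. rewrite D0. pose proof r12_pos. unfold mu, lam. pose proof sq_pos. apply Rmult_lt_0_compat; lra. Qed.

Definition Ej (j : Z) (x : pt) : R := det (vR j) x.

Lemma E_rec j x : Ej (j + 1) x = Ej (j - 1) x + aR (j + 1) * Ej j x.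
Proof. unfold Ej. rewrite vR_rec. unfold det; simpl. ring. Qed.

Lemma E_shift_u j : Ej (j + nn) u0 = mu * Ej j u0.
Proof.
  unfold Ej. rewrite <- M_v. apply (Rmult_eq_reg_l lam); [|apply lam_nz].
  transitivity (det (act (Mprod a) (vR j)) (vscale lam u0)). unfold det, vscale; simpl; ring.
  rewrite <- Mu0, det_act, <- lam_mu. ring.
Qed.
Lemma E_shift_w j : Ej (j + nn) w0 = lam * Ej j w0.
Proof.
  unfold Ej. rewrite <- M_v. apply (Rmult_eq_reg_l mu); [|pose proof mu_pos; lra].
  transitivity (det (act (Mprod a) (vR j)) (vscale mu w0)). unfold det, vscale; simpl; ring.
  rewrite <- Mw0, det_act, <- lam_mu. ring.
Qed.

Lemma SU j : Ej j u0 < 0.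
Proof.
  apply (Zshift_dn (fun j => Ej j u0 < 0) nn (-1)); [apply nn_pos| |].
  - apply Zup2.
    + unfold Ej. rewrite vR_m1. unfold det, u0; simpl. pose proof lam_lt_r11. lra.
    + unfold Ej. rewrite vR_0. unfold det, u0; simpl. pose proof r12_pos. lra.
    + intros k _ H1 H2. rewrite E_rec. pose proof (aR_pos (k + 1)). nra.
  - intros k H. rewrite E_shift_u in H. pose proof mu_pos. nra.
Qed.

Lemma SW j : 0 < Ej j w0 * sg (j + 1).
Proof.
  apply (Zshift_up (fun j => 0 < Ej j w0 * sg (j + 1)) nn 0); [apply nn_pos| |].
  - apply Zdn2.
    + unfold Ej. rewrite vR_m1. unfold det, w0, sg, sgZ; simpl. pose proof mu_gt_r11. lra.
    + unfold Ej. rewrite vR_0. unfold det, w0, sg, sgZ; simpl. pose proof r12_pos. lra.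
    + intros k _ H1 H2. pose proof (E_rec k w0) as E. pose proof (aR_pos (k + 1)).
      replace (k - 1 + 1)%Z with k by ring.
      pose proof (sg_succ k) as S1. pose proof (sg_succ (k + 1)) as S2.
      replace (k + 1 + 1)%Z with (k + 1 + 1)%Z in H2 by ring. rewrite S2, S1 in H2. rewrite S1 in H1.
      assert (Ej (k - 1) w0 = Ej (k + 1) w0 - aR (k + 1) * Ej k w0) by lra. rewrite H0.
      nra.
  - intros k H. rewrite E_shift_w. replace (k + nn + 1)%Z with (k + 1 + nn)%Z by ring.
    rewrite sg_add, <- dM_sg, <- lam_mu.
    replace (lam * Ej k w0 * (sg (k + 1) * (lam * mu))) with ((lam * lam * mu) * (Ej k w0 * sg (k + 1))) by ring.
    apply Rmult_lt_0_compat; auto. pose proof lam_nz. pose proof mu_pos. apply Rmult_lt_0_compat; auto.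
    nra.
Qed.


Definition Vg (t r : Z) (k : Z) : pt := vscale (IZR t) (vR (2 * k + r)).
Definition fcg (t r : Z) (k : Z) : Z * Z :=
  let j := (2 * k + r + 1)%Z in (t * sgZ j * snd (vZ j), - (t * sgZ j * fst (vZ j)))%Z.

Lemma fk_eq t r k q : fk (fcg t r) k q = IZR t * sg (2 * k + r + 1) * det q (vR (2 * k + r + 1)).
Proof. unfold fk, fcg, sg, det, vR. simpl. rewrite !opp_IZR, !mult_IZR. ring. Qed.

Lemma det_next j : det (vR j) (vR (j + 1)) = sg (j + 1).
Proof. rewrite <- det_v. replace (j + 1 - 1)%Z with j by ring. auto. Qed.

Lemma edge_eq t r k : det (Vg t r k) (Vg t r (k + 1)) = IZR t * IZR t * aR (2 * k + r + 2) * sg (2 * k + r + 1).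
Proof.
  unfold Vg. replace (2 * (k + 1) + r)%Z with (2 * k + r + 1 + 1)%Z by ring.
  rewrite (vR_rec (2 * k + r + 1)). replace (2 * k + r + 1 - 1)%Z with (2 * k + r)%Z by ring.
  replace (2 * k + r + 1 + 1)%Z with (2 * k + r + 2)%Z by ring.
  rewrite <- (det_next (2 * k + r)). unfold det, vscale; simpl. ring.
Qed.

Lemma col_eq t r k : det (vsub (Vg t r (k - 1)) (Vg t r k)) (vsub (Vg t r (k + 1)) (Vg t r k)) =
  - (IZR t * IZR t) * aR (2 * k + r) * aR (2 * k + r + 1) * aR (2 * k + r + 2) * sg (2 * k + r).
Proof.
  unfold Vg. set (j := (2 * k + r)%Z).
  replace (2 * (k - 1) + r)%Z with (j - 1 - 1)%Z by (unfold j; ring).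
  replace (2 * (k + 1) + r)%Z with (j + 1 + 1)%Z by (unfold j; ring).
  rewrite (vR_rec' (j - 1)). replace (j - 1 + 1)%Z with j by ring.
  rewrite (vR_rec (j + 1)). replace (j + 1 - 1)%Z with j by ring. rewrite (vR_rec j).
  replace (j + 1 + 1)%Z with (j + 2)%Z by ring.
  rewrite <- (det_v j). unfold det, vsub, vscale; simpl. ring.
Qed.

Lemma tsq t : (t = 1 \/ t = -1)%Z -> IZR t * IZR t = 1.
Proof. intros [->| ->]; simpl; lra. Qed.

Lemma Rabs_IZR_aa k : Rabs (aR k) = aR k.
Proof. apply Rabs_pos_eq. pose proof (aR_pos k). lra. Qed.

Lemma Rabs_sg k : Rabs (sg k) = 1.
Proof. destruct (sg_cases k) as [h|h]; rewrite h; unfold Rabs; destruct (Rcase_abs _); lra. Qed.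

Lemma lls_Vg t r : (t = 1 \/ t = -1)%Z -> forall m, lls (Vg t r) m = aR (m + r + 2).
Proof.
  intros Ht m. pose proof (tsq t Ht) as T. unfold lls.
  destruct (Z.even m) eqn:Em.
  - apply Z.even_spec in Em. destruct Em as [i ->].
    replace (2 * i / 2)%Z with i by (rewrite Z.mul_comm, Z.div_mul; lia).
    rewrite edge_eq, T. replace (2 * i + r + 2)%Z with (2 * i + r + 2)%Z by ring.
    rewrite !Rabs_mult, Rabs_R1, Rabs_IZR_aa, Rabs_sg. ring.
  - assert (Z.odd m = true) by (rewrite <- Z.negb_even, Em; auto).
    apply Z.odd_spec in H. destruct H as [i ->].
    replace ((2 * i + 1 + 1) / 2)%Z with (i + 1)%Z by (replace (2 * i + 1 + 1)%Z with ((i + 1) * 2)%Z by ring; rewrite Z.div_mul; lia).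
    rewrite col_eq. replace (i + 1 - 1)%Z with i by ring. rewrite !edge_eq, T.
    replace (2 * (i + 1) + r)%Z with (2 * i + r + 2)%Z by ring.
    replace (2 * (i + 1) + r + 1)%Z with (2 * i + r + 3)%Z by ring.
    replace (2 * (i + 1) + r + 2)%Z with (2 * i + r + 4)%Z by ring.
    replace (2 * i + r + 1 + 1)%Z with (2 * i + r + 2)%Z by ring.
    replace (2 * i + 1 + r + 2)%Z with (2 * i + r + 3)%Z by ring.
    pose proof (aR_pos (2 * i + r + 2)). pose proof (aR_pos (2 * i + r + 3)). pose proof (aR_pos (2 * i + r + 4)).
    assert (Sg : sg (2 * i + r + 3) = sg (2 * i + r + 1)).
    { replace (2 * i + r + 3)%Z with (2 * i + r + 1 + 2)%Z by ring. rewrite sg_add.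
      replace 2%Z with (2 * 1)%Z by ring. rewrite sg_2k. ring. }
    replace (2 * i + r + 2 + 1)%Z with (2 * i + r + 3)%Z by ring.
    replace (2 * i + r + 2 + 2)%Z with (2 * i + r + 4)%Z by ring.
    unfold Rdiv. rewrite Rabs_mult, Rabs_inv, !Rabs_mult, !Rabs_Ropp, !Rabs_R1, !Rabs_IZR_aa, !Rabs_sg.
    field. lra.
Qed.


Lemma act_scale c p : act (Mprod a) (vscale c p) = vscale c (act (Mprod a) p).
Proof. rewrite !act_M. unfold vscale; simpl. f_equal; ring. Qed.

Lemma M2_Vg t r k : act (mmul (Mprod a) (Mprod a)) (Vg t r k) = Vg t r (k + nn).
Proof.
  rewrite act_mmul. unfold Vg. rewrite !act_scale, !M_v. f_equal. f_equal. ring.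
Qed.

Lemma Vg_shift t r c k : Vg t r (k + c) = Vg t (r + 2 * c) k.
Proof. unfold Vg. f_equal. f_equal. ring. Qed.

Lemma sg_j r k : sg (2 * k + r + 1) = sg (r + 1).
Proof. replace (2 * k + r + 1)%Z with (2 * k + (r + 1))%Z by ring. rewrite sg_add, sg_2k. ring. Qed.

Lemma sg_nn2 j : sg (j + nn + nn) = sg j.
Proof. replace (j + nn + nn)%Z with (j + 2 * nn)%Z by ring. rewrite sg_add, sg_2k. ring. Qed.

Section Inst.
Variables (al be : R) (t r : Z).
Hypothesis Ht : (t = 1 \/ t = -1)%Z.
Hypothesis Hbe : 0 < IZR t * be.
Hypothesis Hal : 0 < IZR t * sg (r + 1) * al.

Definition uu := vscale al u0.
Definition ww := vscale be w0.

Lemma T2 : IZR t * IZR t = 1.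
Proof. apply tsq; auto. Qed.
Lemma al_nz : al <> 0.
Proof. intro h. rewrite h in Hal. lra. Qed.
Lemma be_nz : be <> 0.
Proof. intro h. rewrite h in Hbe. lra. Qed.
Lemma D0_nz : det u0 w0 <> 0.
Proof. pose proof D0_pos. lra. Qed.

Lemma detuw : det uu ww = al * be * det u0 w0.
Proof. unfold uu, ww, det, vscale; simpl. ring. Qed.

Lemma HD_i : det uu ww <> 0.
Proof. rewrite detuw. pose proof al_nz. pose proof be_nz. pose proof D0_nz.
  repeat apply Rmult_integral_contrapositive_currified; auto. Qed.

Lemma sc_V k : sc uu ww (Vg t r k) = IZR t * Ej (2 * k + r) w0 / (al * det u0 w0).
Proof.
  pose proof al_nz. pose proof be_nz. pose proof D0_nz.
  unfold sc. rewrite detuw. unfold Vg, Ej, ww, det, vscale; simpl. field. auto.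
Qed.
Lemma tc_V k : tc uu ww (Vg t r k) = - IZR t * Ej (2 * k + r) u0 / (be * det u0 w0).
Proof.
  pose proof al_nz. pose proof be_nz. pose proof D0_nz.
  unfold tc. rewrite detuw. unfold Vg, Ej, uu, det, vscale; simpl. field. auto.
Qed.

Lemma HV_s_i k : 0 < sc uu ww (Vg t r k).
Proof.
  rewrite sc_V. pose proof al_nz. pose proof D0_pos. pose proof (SW (2 * k + r)) as HW.
  rewrite sg_j in HW. pose proof (sg_sq (r + 1)) as S2.
  replace (IZR t * Ej (2 * k + r) w0 / (al * det u0 w0))
    with ((IZR t * sg (r + 1) * al) * (Ej (2 * k + r) w0 * sg (r + 1)) / (al * al * det u0 w0)).
  2:{ replace ((IZR t * sg (r + 1) * al) * (Ej (2 * k + r) w0 * sg (r + 1)))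
        with (IZR t * al * Ej (2 * k + r) w0 * (sg (r + 1) * sg (r + 1))) by ring.
      rewrite S2. field. lra. }
  apply Rdiv_lt_0_compat. apply Rmult_lt_0_compat; auto.
  apply Rmult_lt_0_compat; auto. apply Rsqr_pos_lt in H. unfold Rsqr in H. auto.
Qed.

Lemma HV_t_i k : 0 < tc uu ww (Vg t r k).
Proof.
  rewrite tc_V. pose proof be_nz. pose proof D0_pos. pose proof (SU (2 * k + r)) as HU.
  replace (- IZR t * Ej (2 * k + r) u0 / (be * det u0 w0))
    with ((IZR t * be) * (- Ej (2 * k + r) u0) / (be * be * det u0 w0)) by (field; lra).
  apply Rdiv_lt_0_compat. apply Rmult_lt_0_compat; lra.
  apply Rmult_lt_0_compat; auto. apply Rsqr_pos_lt in H. unfold Rsqr in H. auto.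
Qed.

Lemma HV_det_i k : 0 < det (Vg t r k) (Vg t r (k + 1)) * det uu ww.
Proof.
  rewrite edge_eq, T2, detuw, sg_j. pose proof (aR_pos (2 * k + r + 2)). pose proof D0_pos.
  assert (E : sg (r + 1) * (al * be) = (IZR t * sg (r + 1) * al) * (IZR t * be)).
  { transitivity ((IZR t * IZR t) * sg (r + 1) * al * be). rewrite T2. ring. ring. }
  replace (1 * aR (2 * k + r + 2) * sg (r + 1) * (al * be * det u0 w0))
    with (aR (2 * k + r + 2) * det u0 w0 * (sg (r + 1) * (al * be))) by ring.
  rewrite E. apply Rmult_lt_0_compat; apply Rmult_lt_0_compat; lra.
Qed.

Lemma HV_int_i k : integer_point (Vg t r k).
Proof.
  unfold Vg, vR, vscale. exists (t * fst (vZ (2 * k + r)))%Z, (t * snd (vZ (2 * k + r)))%Z.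
  simpl. rewrite !mult_IZR. auto.
Qed.

Lemma Hf1_i k : fk (fcg t r) k (Vg t r k) = 1.
Proof.
  rewrite fk_eq. unfold Vg.
  replace (det (vscale (IZR t) (vR (2 * k + r))) (vR (2 * k + r + 1)))
    with (IZR t * det (vR (2 * k + r)) (vR (2 * k + r + 1))) by (unfold det, vscale; simpl; ring).
  rewrite det_next. transitivity ((IZR t * IZR t) * (sg (2 * k + r + 1) * sg (2 * k + r + 1))). ring.
  rewrite T2, sg_sq. ring.
Qed.

Lemma Hf2_i k : fk (fcg t r) k (Vg t r (k + 1)) = 1.
Proof.
  rewrite fk_eq. unfold Vg. replace (2 * (k + 1) + r)%Z with (2 * k + r + 1 + 1)%Z by ring.
  rewrite (vR_rec (2 * k + r + 1)). replace (2 * k + r + 1 - 1)%Z with (2 * k + r)%Z by ring.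
  replace (det (vscale (IZR t) (fst (vR (2 * k + r)) + aR (2 * k + r + 1 + 1) * fst (vR (2 * k + r + 1)),
                 snd (vR (2 * k + r)) + aR (2 * k + r + 1 + 1) * snd (vR (2 * k + r + 1)))) (vR (2 * k + r + 1)))
    with (IZR t * det (vR (2 * k + r)) (vR (2 * k + r + 1))) by (unfold det, vscale; simpl; ring).
  rewrite det_next. transitivity ((IZR t * IZR t) * (sg (2 * k + r + 1) * sg (2 * k + r + 1))). ring.
  rewrite T2, sg_sq. ring.
Qed.

Lemma fk_u k : fk (fcg t r) k uu = (IZR t * sg (r + 1) * al) * (- Ej (2 * k + r + 1) u0).
Proof. rewrite fk_eq, sg_j. unfold uu, Ej, det, vscale; simpl. ring. Qed.
Lemma fk_w k : fk (fcg t r) k ww = (IZR t * be) * (Ej (2 * k + r + 1) w0 * sg (2 * k + r + 1 + 1)).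
Proof. rewrite fk_eq, (sg_succ (2 * k + r + 1)). unfold ww, Ej, det, vscale; cbn [fst snd]. ring. Qed.

Lemma Hfu_i k : 0 < fk (fcg t r) k uu.
Proof. rewrite fk_u. pose proof (SU (2 * k + r + 1)). apply Rmult_lt_0_compat; lra. Qed.
Lemma Hfw_i k : 0 < fk (fcg t r) k ww.
Proof. rewrite fk_w. pose proof (SW (2 * k + r + 1)). apply Rmult_lt_0_compat; lra. Qed.

Lemma fk_u_shift k : fk (fcg t r) (k + nn) uu = mu * mu * fk (fcg t r) k uu.
Proof.
  rewrite !fk_u. replace (2 * (k + nn) + r + 1)%Z with (2 * k + r + 1 + nn + nn)%Z by ring.
  rewrite !E_shift_u. ring.
Qed.
Lemma fk_w_shift k : fk (fcg t r) (k + nn) ww = lam * lam * fk (fcg t r) k ww.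
Proof.
  rewrite !fk_w. replace (2 * (k + nn) + r + 1)%Z with (2 * k + r + 1 + nn + nn)%Z by ring.
  rewrite !E_shift_w. replace (2 * k + r + 1 + nn + nn + 1)%Z with (2 * k + r + 1 + 1 + nn + nn)%Z by ring.
  rewrite sg_nn2. ring.
Qed.

Lemma small_geo (x c e : R) : 0 <= x < 1 -> 0 < e -> exists N : nat, c * x ^ N < e \/ c <= 0.
Proof.
  intros Hx He. destruct (Rle_or_lt c 0) as [h|h]. exists 0%nat. right; auto.
  assert (Hx' : Rabs x < 1) by (rewrite Rabs_pos_eq; lra).
  destruct (pow_lt_1_zero x Hx' (e / c)) as [N HN]. apply Rdiv_lt_0_compat; auto.
  exists N. left. specialize (HN N (le_n N)). rewrite Rabs_pos_eq in HN by (apply pow_le; lra).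
  apply Rmult_lt_compat_l with (r := c) in HN; auto. replace (c * (e / c)) with e in HN by (field; lra). auto.
Qed.

Lemma Hfu0_i e : 0 < e -> exists k, fk (fcg t r) k uu < e.
Proof.
  intros He. set (x := / (mu * mu)). pose proof mu_gt1.
  assert (Hx : 0 <= x < 1).
  { unfold x. split. left. apply Rinv_0_lt_compat. nra.
    apply Rmult_lt_reg_r with (mu * mu). nra. rewrite Rinv_l by nra. nra. }
  assert (Hs : forall m : nat, fk (fcg t r) (- Z.of_nat m * nn) uu = fk (fcg t r) 0 uu * x ^ m).
  { induction m. simpl. replace (- 0 * nn)%Z with 0%Z by ring. ring.
    pose proof (fk_u_shift (- Z.of_nat (S m) * nn)) as E.
    replace (- Z.of_nat (S m) * nn + nn)%Z with (- Z.of_nat m * nn)%Z in E by lia.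
    rewrite IHm in E. rewrite <- tech_pow_Rmult.
    apply (Rmult_eq_reg_l (mu * mu)); [|nra]. rewrite <- E. unfold x. field. nra. }
  destruct (small_geo x (fk (fcg t r) 0 uu) e Hx He) as [N [HN|HN]].
  - exists (- Z.of_nat N * nn)%Z. rewrite Hs. auto.
  - pose proof (Hfu_i 0). lra.
Qed.

Lemma Hfw0_i e : 0 < e -> exists k, fk (fcg t r) k ww < e.
Proof.
  intros He. set (x := lam * lam). pose proof lam_abs. pose proof lam_nz.
  assert (Hx : 0 <= x < 1).
  { unfold x. split. nra. apply Rabs_def2 in H as [H1 H2]. nra. }
  assert (Hs : forall m : nat, fk (fcg t r) (Z.of_nat m * nn) ww = fk (fcg t r) 0 ww * x ^ m).
  { induction m. simpl. replace (0 * nn)%Z with 0%Z by ring. ring.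
    replace (Z.of_nat (S m) * nn)%Z with (Z.of_nat m * nn + nn)%Z by lia.
    rewrite fk_w_shift, IHm, <- tech_pow_Rmult. unfold x. ring. }
  destruct (small_geo x (fk (fcg t r) 0 ww) e Hx He) as [N [HN|HN]].
  - exists (Z.of_nat N * nn)%Z. rewrite Hs. auto.
  - pose proof (Hfw_i 0). lra.
Qed.

Lemma rho_shift k : rho uu ww (Vg t r (k + nn)) = (mu * mu / (lam * lam)) * rho uu ww (Vg t r k).
Proof.
  pose proof (HV_s_i k). pose proof lam_nz. unfold rho. rewrite !sc_V, !tc_V in *.
  replace (2 * (k + nn) + r)%Z with (2 * k + r + nn + nn)%Z by ring.
  rewrite !E_shift_u, !E_shift_w. pose proof al_nz. pose proof be_nz. pose proof D0_nz.
  assert (Ej (2 * k + r) w0 <> 0).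
  { intro h. rewrite h in H. unfold Rdiv in H. rewrite Rmult_0_r, Rmult_0_l in H. lra. }
  field. repeat split; auto. intro h; pose proof T2; rewrite h in H5; lra.
Qed.

Lemma rho0_pos : 0 < rho uu ww (Vg t r 0).
Proof. unfold rho. apply Rdiv_lt_0_compat. apply HV_t_i. apply HV_s_i. Qed.

Lemma q_gt1 : 1 < mu * mu / (lam * lam).
Proof.
  pose proof mu_gt1. pose proof lam_abs. pose proof lam_nz.
  assert (0 < lam * lam) by nra.
  assert (lam * lam < 1). { apply Rabs_def2 in H0 as [H3 H4]. nra. }
  apply Rmult_lt_reg_r with (lam * lam); auto. unfold Rdiv. rewrite Rmult_assoc, Rinv_l by lra. nra.
Qed.

Lemma Hrho_up_i R0 : exists k, R0 < rho uu ww (Vg t r k).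
Proof.
  set (q := mu * mu / (lam * lam)). pose proof q_gt1 as Hq. fold q in Hq. pose proof rho0_pos as H0.
  assert (Hs : forall m : nat, rho uu ww (Vg t r (Z.of_nat m * nn)) = rho uu ww (Vg t r 0) * q ^ m).
  { induction m. simpl. replace (0 * nn)%Z with 0%Z by ring. ring.
    replace (Z.of_nat (S m) * nn)%Z with (Z.of_nat m * nn + nn)%Z by lia.
    rewrite rho_shift, IHm, <- tech_pow_Rmult. fold q. ring. }
  destruct (Pow_x_infinity q) with (b := (Rabs R0 + 1) / rho uu ww (Vg t r 0)) as [N HN].
  rewrite Rabs_pos_eq; lra.
  specialize (HN N (le_n N)). rewrite Rabs_pos_eq in HN by (apply pow_le; lra).
  exists (Z.of_nat N * nn)%Z. rewrite Hs.
  apply Rge_le in HN. apply Rmult_le_compat_l with (r := rho uu ww (Vg t r 0)) in HN; [|lra].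
  replace (rho uu ww (Vg t r 0) * ((Rabs R0 + 1) / rho uu ww (Vg t r 0))) with (Rabs R0 + 1) in HN by (field; lra).
  pose proof (Rle_abs R0). lra.
Qed.

Lemma Hrho_dn_i r0 : 0 < r0 -> exists k, rho uu ww (Vg t r k) < r0.
Proof.
  intros Hr0. set (q := mu * mu / (lam * lam)). pose proof q_gt1 as Hq. fold q in Hq.
  set (x := / q).
  assert (Hx : 0 <= x < 1).
  { unfold x. split. left. apply Rinv_0_lt_compat. lra.
    apply Rmult_lt_reg_r with q. lra. rewrite Rinv_l by lra. lra. }
  assert (Hs : forall m : nat, rho uu ww (Vg t r (- Z.of_nat m * nn)) = rho uu ww (Vg t r 0) * x ^ m).
  { induction m. simpl. replace (- 0 * nn)%Z with 0%Z by ring. ring.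
    pose proof (rho_shift (- Z.of_nat (S m) * nn)) as E. fold q in E.
    replace (- Z.of_nat (S m) * nn + nn)%Z with (- Z.of_nat m * nn)%Z in E by lia.
    rewrite IHm in E. rewrite <- tech_pow_Rmult.
    apply (Rmult_eq_reg_l q); [|lra]. rewrite <- E. unfold x. field. lra. }
  destruct (small_geo x (rho uu ww (Vg t r 0)) r0 Hx Hr0) as [N [HN|HN]].
  - exists (- Z.of_nat N * nn)%Z. rewrite Hs. auto.
  - pose proof rho0_pos. lra.
Qed.

Lemma Hcol_i k : det (vsub (Vg t r (k - 1)) (Vg t r k)) (vsub (Vg t r (k + 1)) (Vg t r k)) <> 0.
Proof.
  rewrite col_eq, T2.
  pose proof (aR_pos (2 * k + r)). pose proof (aR_pos (2 * k + r + 1)). pose proof (aR_pos (2 * k + r + 2)).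
  pose proof (sg_cases (2 * k + r)).
  intro h. repeat (apply Rmult_integral in h; destruct h as [h|h]); try lra.
Qed.

Theorem inst_sv : sail_vertices uu ww (Vg t r).
Proof.
  apply (V_sv uu ww (Vg t r) (fcg t r) HD_i HV_int_i HV_s_i HV_t_i HV_det_i Hf1_i Hf2_i
           Hfu_i Hfw_i Hfu0_i Hfw0_i Hrho_up_i Hrho_dn_i Hcol_i).
Qed.

Theorem inst_unique A : sail_vertices uu ww A -> exists c, forall k, A k = Vg t r (k + c).
Proof.
  apply (sail_unique uu ww (Vg t r) (fcg t r) HD_i HV_int_i HV_s_i HV_t_i HV_det_i Hf1_i Hf2_i
           Hfu_i Hfw_i Hfu0_i Hfw0_i Hrho_up_i Hrho_dn_i Hcol_i).
Qed.

Lemma Vg_inj k l : Vg t r k = Vg t r l -> k = l.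
Proof.
  intro E. apply (mono_inj (fun k => rho uu ww (Vg t r k))).
  - intro j. apply (rhoV_mono uu ww (Vg t r) HD_i HV_s_i HV_det_i).
  - simpl. rewrite E. auto.
Qed.

End Inst.


Lemma tt_sum : tt = lam + mu.
Proof. unfold lam, mu. field. Qed.

Lemma eig_val (u : pt) (lm : R) : (fst u <> 0 \/ snd u <> 0) -> act (Mprod a) u = vscale lm u -> lm = lam \/ lm = mu.
Proof.
  intros Hu E. rewrite act_M in E. unfold vscale in E. injection E as E1 E2.
  assert (K : det (r11 - lm, r12) (r21, r22 - lm) = 0).
  { apply (kernel2 (fst u) (snd u)); auto; simpl; lra. }
  unfold det in K; simpl in K.
  assert ((lm - lam) * (lm - mu) = 0).
  { replace ((lm - lam) * (lm - mu)) with (lm * lm - (lam + mu) * lm + lam * mu) by ring.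
    rewrite <- tt_sum, lam_mu. unfold tt, dM. lra. }
  apply Rmult_integral in H. destruct H; [left|right]; lra.
Qed.

Lemma eig_vec (u : pt) (lm : R) : act (Mprod a) u = vscale lm u -> u = vscale (fst u / r12) (r12, lm - r11).
Proof.
  intros E. rewrite act_M in E. unfold vscale in *. injection E as E1 E2. pose proof r12_pos.
  rewrite (surjective_pairing u) at 1. simpl. f_equal. field. lra.
  apply (Rmult_eq_reg_l r12). 2: lra. field_simplify. 2: lra. lra.
Qed.

Lemma choose_tr al be : al <> 0 -> be <> 0 -> exists t r, (t = 1 \/ t = -1)%Z /\ 0 < IZR t * be /\ 0 < IZR t * sg (r + 1) * al.
Proof.
  intros Ha Hb.
  assert (S1 : sg (0 + 1) = -1) by reflexivity. assert (S2 : sg (1 + 1) = 1) by reflexivity.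
  assert (HB : 0 < be \/ be < 0) by (destruct (Rlt_or_le 0 be) as [h|h]; [left; auto| right; destruct h; auto; contradiction]).
  assert (HA : 0 < al \/ al < 0) by (destruct (Rlt_or_le 0 al) as [h|h]; [left; auto| right; destruct h; auto; contradiction]).
  destruct HB as [hb|hb]; destruct HA as [ha|ha].
  - exists 1%Z, 1%Z. rewrite S2. simpl. repeat split; auto; lra.
  - exists 1%Z, 0%Z. rewrite S1. simpl. repeat split; auto; lra.
  - exists (-1)%Z, 0%Z. rewrite S1. simpl. repeat split; auto; lra.
  - exists (-1)%Z, 1%Z. rewrite S2. simpl. repeat split; auto; lra.
Qed.

Lemma lls_ext (A B : Z -> pt) : (forall k, A k = B k) -> forall m, lls A m = lls B m.
Proof. intros H m. unfold lls. cbv zeta. rewrite !H. reflexivity. Qed.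

Lemma main_conc :
  (exists u w A, assoc_angle (Mprod a) u w /\ sail_vertices u w A /\
     exists s, (1 <= s)%Z /\
       forall k, act (mmul (Mprod a) (Mprod a)) (A k) = A (k + s)%Z) /\
  (forall u w A s,
     assoc_angle (Mprod a) u w -> sail_vertices u w A ->
     (forall k, act (mmul (Mprod a) (Mprod a)) (A k) = A (k + s)%Z) ->
     s = Z.of_nat (length a) /\
     exists j : Z, forall i : nat, (i < length a)%nat ->
       lls A (j + Z.of_nat i)%Z = IZR (nth i a 0%Z)).
Proof.
  assert (S2 : sg (1 + 1) = 1) by reflexivity.
  split.
  - assert (Ht : (1 = 1 \/ 1 = -1)%Z) by auto.
    assert (Hb : 0 < IZR 1 * 1) by (simpl; lra).
    assert (Ha : 0 < IZR 1 * sg (1 + 1) * 1) by (rewrite S2; simpl; lra).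
    exists (uu 1), (ww 1), (Vg 1 1). split; [|split].
    + split. apply (HD_i 1 1 1 1); auto.
      exists lam, mu. split. split. apply lam_abs. rewrite Rabs_pos_eq. apply mu_gt1. pose proof mu_pos; lra.
      split.
      * unfold uu. rewrite act_scale, Mu0. unfold vscale; simpl. f_equal; ring.
      * unfold ww. rewrite act_scale, Mw0. unfold vscale; simpl. f_equal; ring.
    + apply (inst_sv 1 1 1 1); auto.
    + exists nn. split. pose proof nn_pos. lia. intro k. apply M2_Vg.
  - intros u w A s [HD [lm [m [[Hl Hm] [Hu Hw]]]]] HA Hs.
    assert (Hnz : forall p q, det p q <> 0 -> (fst p <> 0 \/ snd p <> 0) /\ (fst q <> 0 \/ snd q <> 0)).
    { intros p q H. unfold det in H. split.
      - destruct (Req_dec (fst p) 0) as [h|h]; auto. destruct (Req_dec (snd p) 0) as [h'|h']; auto.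
        rewrite h, h' in H. lra.
      - destruct (Req_dec (fst q) 0) as [h|h]; auto. destruct (Req_dec (snd q) 0) as [h'|h']; auto.
        rewrite h, h' in H. lra. }
    destruct (Hnz u w HD) as [Hu0 Hw0].
    assert (Elm : lm = lam).
    { destruct (eig_val u lm Hu0 Hu) as [h|h]; auto. pose proof mu_gt1. rewrite h in Hl.
      rewrite Rabs_pos_eq in Hl; lra. }
    assert (Em : m = mu).
    { destruct (eig_val w m Hw0 Hw) as [h|h]; auto. pose proof lam_abs. rewrite h in Hm. lra. }
    subst lm m.
    pose proof (eig_vec u lam Hu) as Eu. pose proof (eig_vec w mu Hw) as Ew.
    fold u0 in Eu. fold w0 in Ew.
    set (al := fst u / r12) in *. set (be := fst w / r12) in *.
    assert (Hal : al <> 0).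
    { intro h. rewrite h in Eu. rewrite Eu in Hu0. unfold vscale in Hu0; simpl in Hu0. lra. }
    assert (Hbe : be <> 0).
    { intro h. rewrite h in Ew. rewrite Ew in Hw0. unfold vscale in Hw0; simpl in Hw0. lra. }
    destruct (choose_tr al be Hal Hbe) as [t [r [Ht [Hb Ha]]]].
    rewrite Eu, Ew in HA. change (sail_vertices (uu al) (ww be) A) in HA.
    destruct (inst_unique al be t r) with (A := A) as [c Hc]; auto.
    split.
    + specialize (Hs 0%Z). rewrite !Hc, M2_Vg in Hs.
      apply (Vg_inj al be t r) in Hs; auto. unfold nn in Hs. lia.
    + exists (- (r + 2 * c) - 1)%Z. intros i Hi.
      assert (HA' : forall k, A k = Vg t (r + 2 * c) k) by (intro k; rewrite Hc, Vg_shift; auto).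
      rewrite (lls_ext _ _ HA'), lls_Vg by auto.
      replace (- (r + 2 * c) - 1 + Z.of_nat i + (r + 2 * c) + 2)%Z with (Z.of_nat i + 1)%Z by ring.
      unfold aR. rewrite aa_nth; auto.
Qed.

End Conc.

Theorem theorem2 (a : list Z) :
  (0 < length a)%nat ->
  Forall (fun x => (0 < x)%Z) a ->
  (exists u w A, assoc_angle (Mprod a) u w /\ sail_vertices u w A /\
     exists s, (1 <= s)%Z /\
       forall k, act (mmul (Mprod a) (Mprod a)) (A k) = A (k + s)%Z) /\
  (forall u w A s,
     assoc_angle (Mprod a) u w -> sail_vertices u w A ->
     (forall k, act (mmul (Mprod a) (Mprod a)) (A k) = A (k + s)%Z) ->
     s = Z.of_nat (length a) /\
     exists j : Z, forall i : nat, (i < length a)%nat ->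
       lls A (j + Z.of_nat i)%Z = IZR (nth i a 0%Z)).
Proof.
  intros Hn Hpos. apply main_conc; auto.
Qed.
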